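(* Let $h=h(u,v)$ be smooth with $h_{uu}h_{vv}<0$, and consider the elliptic system $u_t=h_{uv}u_x+h_{vv}v_x$, $v_t=h_{uu}u_x+h_{uv}v_x$ with analytic initial data, written in complex conjugate Riemann invariants as $\partial_tr_\pm=\lambda_\pm(r)\partial_xr_\pm$. Let $r_\pm(x,t)$ be a generic solution, given by the hodograph equations $x+\lambda_\pm(r)t=\mu_\pm(r)$, with a point of elliptic break-up at $(x_0,t_0)$, i.e. $$\mu^0_{+,+}=\lambda^0_{+,+}t_0,\qquad \mu^0_{-,-}=\lambda^0_{-,-}t_0 .$$ Put $x_\pm=(x-x_0)+\lambda^0_\pm(t-t_0)$ and $\bar r_\pm=r_\pm-r^0_\pm$ regarded as functions of $(x_+,x_-)$. Then the limits $$R_\pm(X_\pm)=\lim_{k\to0}k^{-1/2}\bar r_\pm(kX_+,kX_-)$$ exist and satisfy $$X_\pm=\tfrac12a_\pm R_\pm^2,\qquad a_\pm=\mu^0_{\pm,\pm\pm}-t_0\lambda^0_{\pm,\pm\pm}.$$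
   Context: Riemann invariants: $dr_\pm=\kappa_\pm(\sqrt{|h_{vv}|}\,dv\pm i\sqrt{|h_{uu}|}\,du)$ with $\kappa_-=\overline{\kappa_+}$, so $r_-=\overline{r_+}$; characteristic speeds $\lambda_\pm=h_{uv}\pm i\,\mathrm{sign}(h_{vv})\sqrt{|h_{uu}h_{vv}|}$, $\lambda_-=\overline{\lambda_+}$. The functions $\mu_\pm(r)$ satisfy $\frac{\partial\mu_+}{\partial r_-}=\frac{\mu_+-\mu_-}{\lambda_+-\lambda_-}\frac{\partial\lambda_+}{\partial r_-}$, $\frac{\partial\mu_-}{\partial r_+}=\frac{\mu_+-\mu_-}{\lambda_+-\lambda_-}\frac{\partial\lambda_-}{\partial r_+}$. Notation: $g_{\pm,\dots}$ denotes partial derivatives with respect to the Riemann invariants after the comma (e.g. $\mu_{+,++}=\partial^2\mu_+/\partial r_+^2$); a superscript $0$ denotes evaluation at $r^0=r(x_0,t_0)$. ''Generic'' includes the nondegeneracy assumption $a_\pm\neq0$. *)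

(* Defs.v *)
From Stdlib Require Import Reals.
From Coquelicot Require Import Coquelicot.
Open Scope R_scope.

(* Riemann invariants: r_+ = z : C, r_- = conj z.  Functions of the Riemann
   invariants are functions f : C -> C of the point r_+ (r_- = conj r_+). *)

Definition dRe (f : C -> C) (z : C) : C :=
  (Derive (fun s => Re (f (s, Im z))) (Re z),
   Derive (fun s => Im (f (s, Im z))) (Re z)).
Definition dIm (f : C -> C) (z : C) : C :=
  (Derive (fun s => Re (f (Re z, s))) (Im z),
   Derive (fun s => Im (f (Re z, s))) (Im z)).

(* partial derivatives with respect to the Riemann invariants:
   d/dr_+ and d/dr_- (Wirtinger derivatives, since r_- = conj r_+) *)
Definition dp (f : C -> C) (z : C) : C :=
  Cmult (RtoC (/ 2)) (Cminus (dRe f z) (Cmult Ci (dIm f z))).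
Definition dm (f : C -> C) (z : C) : C :=
  Cmult (RtoC (/ 2)) (Cplus (dRe f z) (Cmult Ci (dIm f z))).

Fixpoint Ck_on (n : nat) (U : C -> Prop) (f : C -> C) : Prop :=
  match n with
  | O => forall z, U z -> continuous f z
  | S m =>
      (forall z, U z ->
         ex_derive (fun s => Re (f (s, Im z))) (Re z) /\
         ex_derive (fun s => Im (f (s, Im z))) (Re z) /\
         ex_derive (fun s => Re (f (Re z, s))) (Im z) /\
         ex_derive (fun s => Im (f (Re z, s))) (Im z))
      /\ Ck_on m U (dRe f) /\ Ck_on m U (dIm f)
  end.

Definition smooth_on (U : C -> Prop) (f : C -> C) : Prop :=
  forall n, Ck_on n U f.

Definition Cball (z0 : C) (eps : R) : C -> Prop :=
  fun z => Cmod (Cminus z z0) < eps.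

Definition lam_minus (lam : C -> C) : C -> C := fun z => Cconj (lam z).

Definition a_plus (lam mu_p : C -> C) (t0 : R) (r0 : C) : C :=
  Cminus (dp (dp mu_p) r0) (Cmult (RtoC t0) (dp (dp lam) r0)).
Definition a_minus (lam mu_m : C -> C) (t0 : R) (r0 : C) : C :=
  Cminus (dm (dm mu_m) r0) (Cmult (RtoC t0) (dm (dm (lam_minus lam)) r0)).

Definition continuous_on2 (Omega : R -> R -> Prop) (r : R -> R -> C) : Prop :=
  forall x t, Omega x t -> forall e, 0 < e -> exists d, 0 < d /\
    forall x' t', Omega x' t' -> Rabs (x' - x) < d -> Rabs (t' - t) < d ->
      Cmod (Cminus (r x' t') (r x t)) < e.

(* Main.v *)
Require Import Defs.
From Stdlib Require Import Reals.
From Coquelicot Require Import Coquelicot.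
Open Scope R_scope.
From Stdlib Require Import Lra.

Lemma deriv_eps (f : R -> R) x l : is_derive f x l ->
  forall e, 0 < e -> exists d, 0 < d /\ forall h, Rabs h < d ->
    Rabs (f (x + h) - f x - h * l) <= e * Rabs h.
Proof.
  intros H e He. apply is_derive_Reals in H.
  destruct (H e He) as [d Hd]. exists d. split; [apply cond_pos|].
  intros h Hh. destruct (Req_dec h 0) as [->|Hn].
  - rewrite Rplus_0_r, Rabs_R0. replace (f x - f x - 0 * l) with 0 by ring.
    rewrite Rabs_R0; lra.
  - specialize (Hd h Hn Hh).
    replace (f (x + h) - f x - h * l) with (((f (x + h) - f x) / h - l) * h)
      by (field; auto).
    rewrite Rabs_mult. apply Rmult_le_compat_r; [apply Rabs_pos|lra].
Qed.

Lemma mvt_bound (f df : R -> R) (c a M : R) :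
  (forall s, Rabs (s - c) <= Rabs a -> is_derive f s (df s)) ->
  (forall s, Rabs (s - c) <= Rabs a -> Rabs (df s) <= M) ->
  Rabs (f (c + a) - f c) <= M * Rabs a.
Proof.
  intros Hd Hb.
  assert (Hin : forall s, Rmin c (c + a) <= s <= Rmax c (c + a) -> Rabs (s - c) <= Rabs a).
  { intros s [H1 H2]. unfold Rmin, Rmax in *.
    destruct (Rle_dec c (c + a)); unfold Rabs;
    repeat destruct Rcase_abs; lra. }
  destruct (MVT_gen f c (c + a) df) as [s [Hs Heq]].
  - intros s [H1 H2]. apply Hd, Hin; lra.
  - intros s Hs. apply continuity_pt_filterlim.
    apply (ex_derive_continuous f). eexists. apply Hd, Hin; lra.
  - rewrite Heq. replace (c + a - c) with a by ring. rewrite Rabs_mult.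
    apply Rmult_le_compat_r; [apply Rabs_pos|]. apply Hb, Hin; lra.
Qed.
Definition p1 (u : R -> R -> R) x y := Derive (fun s => u s y) x.
Definition p2 (u : R -> R -> R) x y := Derive (fun s => u x s) y.

Lemma peano2 (u : R -> R -> R) x0 y0 d0 :
 0 < d0 ->
 (forall x y, Rabs (x-x0) < d0 -> Rabs (y-y0) < d0 ->
    ex_derive (fun s => u s y) x /\ ex_derive (fun s => u x s) y /\
    ex_derive (fun s => p2 u x s) y) ->
 ex_derive (fun s => p1 u s y0) x0 ->
 ex_derive (fun s => p2 u s y0) x0 ->
 (forall e, 0 < e -> exists d, 0 < d /\ forall x y, Rabs (x-x0) < d -> Rabs (y-y0) < d ->
    Rabs (p2 (p2 u) x y - p2 (p2 u) x0 y0) < e) ->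
 forall e, 0 < e -> exists d, 0 < d /\ forall a b, Rabs a < d -> Rabs b < d ->
  Rabs (u (x0+a) (y0+b) - u x0 y0 - a * p1 u x0 y0 - b * p2 u x0 y0
        - /2 * a^2 * p1 (p1 u) x0 y0 - a*b* p1 (p2 u) x0 y0
        - /2 * b^2 * p2 (p2 u) x0 y0) <= e * (a^2+b^2).
Proof.
  intros Hd0 Hex H11 H12 Hc e He.
  set (P1 := p1 u x0 y0). set (P2 := p2 u x0 y0).
  set (P11 := p1 (p1 u) x0 y0). set (P12 := p1 (p2 u) x0 y0).
  set (P22 := p2 (p2 u) x0 y0).
  assert (He2 : 0 < e/2) by lra. assert (He4 : 0 < e/4) by lra.
  destruct (deriv_eps _ _ _ (Derive_correct _ _ H11) (e/2) He2) as [d1 [Hd1 D1]].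
  destruct (deriv_eps _ _ _ (Derive_correct _ _ H12) (e/4) He4) as [d2 [Hd2 D2]].
  destruct (Hc (e/4) He4) as [d3 [Hd3 D3]].
  exists (Rmin d0 (Rmin d1 (Rmin d2 d3))). split.
  { repeat apply Rmin_glb_lt; lra. }
  intros a b Ha Hb.
  assert (Ha0 : Rabs a < d0) by (eapply Rlt_le_trans; [apply Ha|apply Rmin_l]).
  assert (Ha1 : Rabs a < d1) by (eapply Rlt_le_trans; [apply Ha|];
    eapply Rle_trans; [apply Rmin_r|apply Rmin_l]).
  assert (Ha2 : Rabs a < d2) by (eapply Rlt_le_trans; [apply Ha|];
    eapply Rle_trans; [apply Rmin_r|]; eapply Rle_trans; [apply Rmin_r|apply Rmin_l]).
  assert (Ha3 : Rabs a < d3) by (eapply Rlt_le_trans; [apply Ha|];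
    eapply Rle_trans; [apply Rmin_r|]; eapply Rle_trans; [apply Rmin_r|apply Rmin_r]).
  assert (Hb0 : Rabs b < d0) by (eapply Rlt_le_trans; [apply Hb|apply Rmin_l]).
  assert (Hb3 : Rabs b < d3) by (eapply Rlt_le_trans; [apply Hb|];
    eapply Rle_trans; [apply Rmin_r|]; eapply Rle_trans; [apply Rmin_r|apply Rmin_r]).
  assert (Hpsi : Rabs ((u (x0 + a) y0 - (x0 + a - x0) * P1 - /2 * (x0 + a - x0)^2 * P11)
               - (u x0 y0 - (x0 - x0) * P1 - /2 * (x0 - x0)^2 * P11)) <= (e/2 * Rabs a) * Rabs a).
  { apply (mvt_bound (fun s => u s y0 - (s - x0)*P1 - /2*(s-x0)^2*P11)
            (fun s => p1 u s y0 - P1 - (s - x0) * P11)).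
    - intros s Hs. auto_derive.
      + destruct (Hex s y0) as [Hx _]; [lra| rewrite Rminus_eq_0, Rabs_R0; lra|exact Hx].
      + unfold p1; simpl. field.
    - intros s Hs. specialize (D1 (s - x0) ltac:(lra)).
      replace (x0 + (s - x0)) with s in D1 by ring.
      eapply Rle_trans; [|apply Rmult_le_compat_l; [lra|apply Hs]].
      replace (p1 u s y0 - P1 - (s - x0) * P11) with
        (p1 u s y0 - p1 u x0 y0 - (s - x0) * Derive (fun s0 : R => p1 u s0 y0) x0)
        by (unfold P1, P11; reflexivity).
      exact D1. }
  assert (Hw : forall t, Rabs t <= Rabs b ->
     Rabs (p2 u (x0 + a) (y0 + t) - P2 - a * P12 - t * P22) <= e/4 * (Rabs a + Rabs t)).
  { intros t Ht.
    assert (HA : Rabs ((p2 u (x0+a) (y0+t) - (y0 + t - y0) * P22) - (p2 u (x0+a) y0 - (y0 - y0) * P22))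
                  <= e/4 * Rabs t).
    { apply (mvt_bound (fun s => p2 u (x0+a) s - (s - y0) * P22)
                       (fun s => p2 (p2 u) (x0+a) s - P22)).
      - intros s Hs. auto_derive.
        + destruct (Hex (x0+a) s) as [_ [_ Hx]]; [|lra|exact Hx].
          replace (x0 + a - x0) with a by ring. lra.
        + unfold p2; simpl; ring.
      - intros s Hs. left. apply D3; [replace (x0 + a - x0) with a by ring|]; lra. }
    specialize (D2 a Ha2).
    replace (p2 u (x0 + a) (y0 + t) - P2 - a * P12 - t * P22) with
      (((p2 u (x0+a) (y0+t) - (y0 + t - y0) * P22) - (p2 u (x0+a) y0 - (y0 - y0) * P22))
       + (p2 u (x0 + a) y0 - p2 u x0 y0 - a * Derive (fun s : R => p2 u s y0) x0))
      by (unfold P2, P12, p1; simpl; ring).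
    eapply Rle_trans; [apply Rabs_triang|]. eapply Rle_trans; [apply Rplus_le_compat; [exact HA|exact D2]|]. lra. }
  assert (Hchi : Rabs ((u (x0+a) (y0+b) - (y0+b-y0) * P2 - a * (y0+b-y0) * P12 - /2 * (y0+b-y0)^2 * P22)
          - (u (x0+a) y0 - (y0-y0) * P2 - a * (y0-y0) * P12 - /2 * (y0-y0)^2 * P22))
          <= (e/4 * (Rabs a + Rabs b)) * Rabs b).
  { apply (mvt_bound (fun s => u (x0+a) s - (s-y0) * P2 - a * (s-y0) * P12 - /2 * (s-y0)^2 * P22)
            (fun s => p2 u (x0+a) s - P2 - a * P12 - (s - y0) * P22)).
    - intros s Hs. auto_derive.
      + destruct (Hex (x0+a) s) as [_ [Hx _]]; [|lra|exact Hx].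
        replace (x0 + a - x0) with a by ring. lra.
      + unfold p2; simpl; field.
    - intros s Hs. specialize (Hw (s - y0) Hs). replace (y0 + (s - y0)) with s in Hw by ring.
      eapply Rle_trans; [apply Hw|]. apply Rmult_le_compat_l; lra. }
  replace (u (x0+a) (y0+b) - u x0 y0 - a * P1 - b * P2
        - /2 * a^2 * P11 - a*b* P12
        - /2 * b^2 * P22) with
     (((u (x0+a) (y0+b) - (y0+b-y0) * P2 - a * (y0+b-y0) * P12 - /2 * (y0+b-y0)^2 * P22)
          - (u (x0+a) y0 - (y0-y0) * P2 - a * (y0-y0) * P12 - /2 * (y0-y0)^2 * P22))
      + ((u (x0 + a) y0 - (x0 + a - x0) * P1 - /2 * (x0 + a - x0)^2 * P11)
               - (u x0 y0 - (x0 - x0) * P1 - /2 * (x0 - x0)^2 * P11)))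
     by (unfold P1, P2, P11, P12, P22; ring).
  eapply Rle_trans; [apply Rabs_triang|].
  eapply Rle_trans; [apply Rplus_le_compat; [exact Hchi|exact Hpsi]|].
  assert (Ea : a^2 = Rabs a * Rabs a) by (rewrite <- Rabs_mult; simpl; rewrite Rmult_1_r; symmetry; apply Rabs_right; nra).
  assert (Eb : b^2 = Rabs b * Rabs b) by (rewrite <- Rabs_mult; simpl; rewrite Rmult_1_r; symmetry; apply Rabs_right; nra).
  assert (0 <= Rabs a) by apply Rabs_pos. assert (0 <= Rabs b) by apply Rabs_pos.
  rewrite Ea, Eb.
  assert (HAB : Rabs a * Rabs b <= (Rabs a * Rabs a + Rabs b * Rabs b) / 2) by
    (pose proof (Rle_0_sqr (Rabs a - Rabs b)); unfold Rsqr in *; lra).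
  assert (e * (Rabs a * Rabs b) <= e * ((Rabs a * Rabs a + Rabs b * Rabs b) / 2))
    by (apply Rmult_le_compat_l; lra).
  assert (0 <= e * (Rabs b * Rabs b)) by (apply Rmult_le_pos; nra).
  assert (0 <= e * (Rabs a * Rabs a)) by (apply Rmult_le_pos; nra).
  lra.
Qed.

Lemma Cmod_le_sum (w : C) : Cmod w <= Rabs (Re w) + Rabs (Im w).
Proof.
  unfold Cmod. rewrite <- (sqrt_Rsqr (Rabs (Re w) + Rabs (Im w))).
  2: { pose proof (Rabs_pos (Re w)); pose proof (Rabs_pos (Im w)); lra. }
  apply sqrt_le_1_alt. unfold Rsqr, Re, Im.
  pose proof (Rabs_pos (fst w)); pose proof (Rabs_pos (snd w)).
  assert (fst w ^ 2 = Rabs (fst w) * Rabs (fst w)) by (rewrite <- Rabs_mult; simpl; rewrite Rmult_1_r; symmetry; apply Rabs_right; nra).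
  assert (snd w ^ 2 = Rabs (snd w) * Rabs (snd w)) by (rewrite <- Rabs_mult; simpl; rewrite Rmult_1_r; symmetry; apply Rabs_right; nra).
  nra.
Qed.

Lemma cont_C_eps (g : C -> C) (z0 : C) : continuous g z0 ->
  forall e, 0 < e -> exists d, 0 < d /\ forall x y, Rabs (x - Re z0) < d -> Rabs (y - Im z0) < d ->
    Rabs (Re (g (x, y)) - Re (g z0)) < e /\ Rabs (Im (g (x, y)) - Im (g z0)) < e.
Proof.
  intros Hc e He.
  assert (Hl : locally (g z0) (ball (g z0) (mkposreal e He))) by apply locally_ball.
  specialize (Hc _ Hl). destruct Hc as [d Hd]. exists d. split; [apply cond_pos|].
  intros x y Hx Hy. destruct z0 as [x0 y0].
  assert (Hb : ball (x0, y0) d (x, y)) by (split; simpl; assumption).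
  specialize (Hd _ Hb). destruct Hd as [H1 H2]. simpl in H1, H2. split; assumption.
Qed.

Definition ur (f : C -> C) x y := Re (f (x, y)).
Definition ui (f : C -> C) x y := Im (f (x, y)).

Lemma Cball_sq z0 eps x y : 0 < eps -> Rabs (x - Re z0) < eps/2 -> Rabs (y - Im z0) < eps/2 ->
  Cball z0 eps (x, y).
Proof.
  intros He Hx Hy. unfold Cball. eapply Rle_lt_trans; [apply Cmod_le_sum|].
  destruct z0 as [x0 y0]. simpl in *. unfold Rminus in *. lra.
Qed.

Lemma peanoC (f : C -> C) z0 eps : 0 < eps -> Ck_on 2 (Cball z0 eps) f ->
  forall e, 0 < e -> exists d, 0 < d /\ forall a b, Rabs a < d -> Rabs b < d ->
  Cmod (f ((Re z0 + a)%R, (Im z0 + b)%R) - f z0 - RtoC a * dRe f z0 - RtoC b * dIm f z0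
        - RtoC (/2 * a^2) * dRe (dRe f) z0 - RtoC (a * b) * dRe (dIm f) z0
        - RtoC (/2 * b^2) * dIm (dIm f) z0)%C <= e * (a^2 + b^2).
Proof.
  intros Heps [Hf [[Hf1 [Hf11 Hf12]] [Hf2 [Hf21 Hf22]]]] e He.
  destruct z0 as [x0 y0].
  assert (Hsq : forall x y, Rabs (x - x0) < eps/2 -> Rabs (y - y0) < eps/2 -> Cball (x0,y0) eps (x,y))
    by (intros; apply Cball_sq; auto).
  assert (Hc0 : Cball (x0,y0) eps (x0,y0)) by (apply Hsq; rewrite Rminus_eq_0, Rabs_R0; lra).
  assert (He2 : 0 < e/2) by lra.
  destruct (peano2 (ur f) x0 y0 (eps/2)) with (e := e/2) as [d1 [Hd1 D1]]; [lra| | | | |exact He2|].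
  - intros x y Hx Hy. destruct (Hf _ (Hsq x y Hx Hy)) as [A [_ [B _]]].
    destruct (Hf2 _ (Hsq x y Hx Hy)) as [_ [_ [C0 _]]]. split; [exact A|split; [exact B|exact C0]].
  - exact (proj1 (Hf1 _ Hc0)).
  - exact (proj1 (Hf2 _ Hc0)).
  - intros e' He'. destruct (cont_C_eps _ _ (Hf22 _ Hc0) e' He') as [d [Hd D]].
    exists d. split; [exact Hd|]. intros x y Hx Hy. exact (proj1 (D x y Hx Hy)).
  - destruct (peano2 (ui f) x0 y0 (eps/2)) with (e := e/2) as [d2 [Hd2 D2]]; [lra| | | | |exact He2|].
    + intros x y Hx Hy. destruct (Hf _ (Hsq x y Hx Hy)) as [_ [A [_ B]]].
      destruct (Hf2 _ (Hsq x y Hx Hy)) as [_ [_ [_ C0]]]. split; [exact A|split; [exact B|exact C0]].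
    + exact (proj1 (proj2 (Hf1 _ Hc0))).
    + exact (proj1 (proj2 (Hf2 _ Hc0))).
    + intros e' He'. destruct (cont_C_eps _ _ (Hf22 _ Hc0) e' He') as [d [Hd D]].
      exists d. split; [exact Hd|]. intros x y Hx Hy. exact (proj2 (D x y Hx Hy)).
    + exists (Rmin d1 d2). split; [apply Rmin_glb_lt; lra|].
      intros a b Ha Hb.
      assert (Ha1 : Rabs a < d1) by (eapply Rlt_le_trans; [apply Ha|apply Rmin_l]).
      assert (Ha2 : Rabs a < d2) by (eapply Rlt_le_trans; [apply Ha|apply Rmin_r]).
      assert (Hb1 : Rabs b < d1) by (eapply Rlt_le_trans; [apply Hb|apply Rmin_l]).
      assert (Hb2 : Rabs b < d2) by (eapply Rlt_le_trans; [apply Hb|apply Rmin_r]).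
      specialize (D1 a b Ha1 Hb1). specialize (D2 a b Ha2 Hb2).
      eapply Rle_trans; [apply Cmod_le_sum|].
      unfold ur, ui, p1, p2, dRe, dIm, Re, Im in *. simpl in *.
      match goal with |- Rabs ?A + Rabs ?B <= _ =>
        match type of D1 with Rabs ?A' <= _ => replace A with A' by ring end;
        match type of D2 with Rabs ?B' <= _ => replace B with B' by ring end end.
      lra.
Qed.

Definition cder (F : R -> C) (s : R) (l : C) :=
  is_derive (fun t => Re (F t)) s (Re l) /\ is_derive (fun t => Im (F t)) s (Im l).

Lemma der_mult (f g : R -> R) x l m : is_derive f x l -> is_derive g x m ->
  is_derive (fun t => f t * g t) x (l * g x + f x * m).
Proof.
  intros A B. pose proof (is_derive_unique _ _ _ A) as EA. pose proof (is_derive_unique _ _ _ B) as EB.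
  auto_derive.
  - split; [eexists; exact A|split; [eexists; exact B|exact I]].
  - replace (Derive (fun x0 : R => f x0) x) with l by (symmetry; apply is_derive_unique; exact A).
    replace (Derive (fun x0 : R => g x0) x) with m by (symmetry; apply is_derive_unique; exact B). ring.
Qed.

Lemma der_plus (f g : R -> R) x l m : is_derive f x l -> is_derive g x m ->
  is_derive (fun t => f t + g t) x (l + m).
Proof.
  intros A B. pose proof (is_derive_unique _ _ _ A) as EA. pose proof (is_derive_unique _ _ _ B) as EB.
  auto_derive.
  - split; [eexists; exact A|split; [eexists; exact B|exact I]].
  - replace (Derive (fun x0 : R => f x0) x) with l by (symmetry; apply is_derive_unique; exact A).
    replace (Derive (fun x0 : R => g x0) x) with m by (symmetry; apply is_derive_unique; exact B). ring.
Qed.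

Lemma der_opp (f : R -> R) x l : is_derive f x l -> is_derive (fun t => - f t) x (- l).
Proof. intros A. exact (is_derive_opp (K := R_AbsRing) (V := R_NormedModule) f x l A). Qed.

Lemma der_eq (f : R -> R) x l l' : is_derive f x l -> l = l' -> is_derive f x l'.
Proof. intros H ->; exact H. Qed.

Lemma cder_plus F G s l m : cder F s l -> cder G s m -> cder (fun t => (F t + G t)%C) s (l + m)%C.
Proof.
  intros [A B] [C0 D]. split.
  - exact (der_plus _ _ _ _ _ A C0).
  - exact (der_plus _ _ _ _ _ B D).
Qed.

Lemma cder_opp F s l : cder F s l -> cder (fun t => (- F t)%C) s (- l)%C.
Proof.
  intros [A B]. split.
  - exact (der_opp _ _ _ A).
  - exact (der_opp _ _ _ B).
Qed.

Lemma cder_minus F G s l m : cder F s l -> cder G s m -> cder (fun t => (F t - G t)%C) s (l - m)%C.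
Proof. intros A B. apply cder_plus; [exact A|apply cder_opp, B]. Qed.

Lemma cder_mult F G s l m : cder F s l -> cder G s m ->
  cder (fun t => (F t * G t)%C) s (l * G s + F s * m)%C.
Proof.
  intros [A B] [C0 D]. split.
  - eapply der_eq; [apply der_plus; [apply (der_mult _ _ _ _ _ A C0)|apply der_opp, (der_mult _ _ _ _ _ B D)]|].
    simpl. unfold Re, Im. ring.
  - eapply der_eq; [apply der_plus; [apply (der_mult _ _ _ _ _ A D)|apply (der_mult _ _ _ _ _ B C0)]|].
    simpl. unfold Re, Im. ring.
Qed.

Lemma cder_const (c : C) s : cder (fun _ => c) s 0%C.
Proof. split; simpl; apply (is_derive_const (V := R_NormedModule)). Qed.

Lemma cder_conj F s l : cder F s l -> cder (fun t => Cconj (F t)) s (Cconj l).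
Proof. intros [A B]. split; [exact A|exact (der_opp _ _ _ B)]. Qed.

Lemma cder_unique F s l m : cder F s l -> cder F s m -> l = m.
Proof.
  intros [A B] [C0 D]. destruct l as [l1 l2], m as [m1 m2].
  apply is_derive_unique in A, B, C0, D. simpl in *. congruence.
Qed.

Lemma cder_ext_loc F G s l d : 0 < d -> (forall t, Rabs (t - s) < d -> F t = G t) ->
  cder F s l -> cder G s l.
Proof.
  intros Hd Heq [A B].
  assert (L : forall P : C -> R, locally s (fun t => P (F t) = P (G t))).
  { intros P. exists (mkposreal d Hd). intros t Ht. rewrite Heq; [reflexivity|exact Ht]. }
  split; eapply is_derive_ext_loc; [apply (L Re)|exact A|apply (L Im)|exact B].
Qed.

Definition exd (f : C -> C) (z : C) :=
  ex_derive (fun s => Re (f (s, Im z))) (Re z) /\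
  ex_derive (fun s => Im (f (s, Im z))) (Re z) /\
  ex_derive (fun s => Re (f (Re z, s))) (Im z) /\
  ex_derive (fun s => Im (f (Re z, s))) (Im z).

Lemma cder_s1 f z : exd f z -> cder (fun t => f (t, Im z)) (Re z) (dRe f z).
Proof. intros [A [B _]]. split; apply Derive_correct; assumption. Qed.

Lemma cder_s2 f z : exd f z -> cder (fun t => f (Re z, t)) (Im z) (dIm f z).
Proof. intros [_ [_ [A B]]]. split; apply Derive_correct; assumption. Qed.

Lemma Ck2_exd U f z : Ck_on 2 U f -> U z -> exd f z /\ exd (dRe f) z /\ exd (dIm f) z.
Proof.
  intros [H0 [[H1 _] [H2 _]]] Hz. split; [exact (H0 z Hz)|split; [exact (H1 z Hz)|exact (H2 z Hz)]].
Qed.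

Lemma cder_scal (c : C) F s l : cder F s l -> cder (fun t => (c * F t)%C) s (c * l)%C.
Proof.
  intros H. pose proof (cder_mult (fun _ => c) F s 0%C l (cder_const c s) H) as H'.
  replace (c * l)%C with (0 * F s + c * l)%C by ring. exact H'.
Qed.

Lemma dRe_conj f z : dRe (lam_minus f) z = Cconj (dRe f z).
Proof.
  unfold dRe, lam_minus, Cconj. simpl. f_equal. apply Derive_opp.
Qed.

Lemma dIm_conj f z : dIm (lam_minus f) z = Cconj (dIm f z).
Proof.
  unfold dIm, lam_minus, Cconj. simpl. f_equal. apply Derive_opp.
Qed.

Lemma kill_deriv (P Q K S : C -> C) (sl : R -> C) s0 d p q r s' :
  0 < d -> (forall t, Rabs (t - s0) < d -> (P (sl t) * Q (sl t) = K (sl t) * S (sl t))%C) ->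
  cder (fun t => P (sl t)) s0 p -> cder (fun t => Q (sl t)) s0 q ->
  cder (fun t => K (sl t)) s0 r -> cder (fun t => S (sl t)) s0 s' ->
  P (sl s0) = 0%C -> K (sl s0) = 0%C -> r = 0%C -> Q (sl s0) <> 0%C -> p = 0%C.
Proof.
  intros Hd Heq HP HQ HR HS P0 R0 r0 Q0.
  pose proof (cder_mult _ _ _ _ _ HP HQ) as H1.
  pose proof (cder_mult _ _ _ _ _ HR HS) as H2.
  apply (cder_ext_loc _ (fun t => (K (sl t) * S (sl t))%C) _ _ d Hd) in H1; [|exact Heq].
  pose proof (cder_unique _ _ _ _ H1 H2) as E.
  cbv beta in E. rewrite P0, R0, r0 in E.
  replace p with ((p * Q (sl s0) + 0 * q) / Q (sl s0))%C by (field; exact Q0).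
  rewrite E. field. exact Q0.
Qed.

Lemma Cball_s1 z0 eps t : 0 < eps -> Rabs (t - Re z0) < eps/2 -> Cball z0 eps (t, Im z0).
Proof. intros. apply Cball_sq; auto. rewrite Rminus_eq_0, Rabs_R0; lra. Qed.
Lemma Cball_s2 z0 eps t : 0 < eps -> Rabs (t - Im z0) < eps/2 -> Cball z0 eps (Re z0, t).
Proof. intros. apply Cball_sq; auto. rewrite Rminus_eq_0, Rabs_R0; lra. Qed.

Lemma dRe_pm (D1 D2 : C) : D1 = (RtoC (/2) * (D1 - Ci * D2) + RtoC (/2) * (D1 + Ci * D2))%C.
Proof. destruct D1, D2. unfold Ci. apply injective_projections; simpl; field. Qed.
Lemma dIm_pm (D1 D2 : C) : D2 = (Ci * (RtoC (/2) * (D1 - Ci * D2) - RtoC (/2) * (D1 + Ci * D2)))%C.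
Proof. destruct D1, D2. unfold Ci. apply injective_projections; simpl; field. Qed.

Lemma cder_dm_s1 f z : exd (dRe f) z -> exd (dIm f) z ->
  cder (fun t => dm f (t, Im z)) (Re z) (RtoC (/2) * (dRe (dRe f) z + Ci * dRe (dIm f) z))%C.
Proof.
  intros A B. unfold dm. apply cder_scal, cder_plus; [apply cder_s1, A|apply cder_scal, cder_s1, B].
Qed.
Lemma cder_dm_s2 f z : exd (dRe f) z -> exd (dIm f) z ->
  cder (fun t => dm f (Re z, t)) (Im z) (RtoC (/2) * (dIm (dRe f) z + Ci * dIm (dIm f) z))%C.
Proof.
  intros A B. unfold dm. apply cder_scal, cder_plus; [apply cder_s2, A|apply cder_scal, cder_s2, B].
Qed.
Lemma cder_dp_s1 f z : exd (dRe f) z -> exd (dIm f) z ->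
  cder (fun t => dp f (t, Im z)) (Re z) (RtoC (/2) * (dRe (dRe f) z - Ci * dRe (dIm f) z))%C.
Proof.
  intros A B. unfold dp. apply cder_scal, cder_minus; [apply cder_s1, A|apply cder_scal, cder_s1, B].
Qed.
Lemma cder_dp_s2 f z : exd (dRe f) z -> exd (dIm f) z ->
  cder (fun t => dp f (Re z, t)) (Im z) (RtoC (/2) * (dIm (dRe f) z - Ci * dIm (dIm f) z))%C.
Proof.
  intros A B. unfold dp. apply cder_scal, cder_minus; [apply cder_s2, A|apply cder_scal, cder_s2, B].
Qed.
Lemma cder_dpc_s1 f z : exd (dRe f) z -> exd (dIm f) z ->
  cder (fun t => dp (lam_minus f) (t, Im z)) (Re z)
    (RtoC (/2) * (Cconj (dRe (dRe f) z) - Ci * Cconj (dRe (dIm f) z)))%C.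
Proof.
  intros A B.
  apply (cder_ext_loc (fun t => RtoC (/2) * (Cconj (dRe f (t, Im z)) - Ci * Cconj (dIm f (t, Im z))))%C _ _ _ 1);
    [lra| intros t _; unfold dp; rewrite dRe_conj, dIm_conj; reflexivity|].
  apply cder_scal, cder_minus; [apply cder_conj, cder_s1, A|apply cder_scal, cder_conj, cder_s1, B].
Qed.
Lemma cder_dpc_s2 f z : exd (dRe f) z -> exd (dIm f) z ->
  cder (fun t => dp (lam_minus f) (Re z, t)) (Im z)
    (RtoC (/2) * (Cconj (dIm (dRe f) z) - Ci * Cconj (dIm (dIm f) z)))%C.
Proof.
  intros A B.
  apply (cder_ext_loc (fun t => RtoC (/2) * (Cconj (dRe f (Re z, t)) - Ci * Cconj (dIm f (Re z, t))))%C _ _ _ 1);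
    [lra| intros t _; unfold dp; rewrite dRe_conj, dIm_conj; reflexivity|].
  apply cder_scal, cder_minus; [apply cder_conj, cder_s2, A|apply cder_scal, cder_conj, cder_s2, B].
Qed.

Lemma pm_split f z a b : dp f z = a -> dm f z = b ->
  dRe f z = (a + b)%C /\ dIm f z = (Ci * (a - b))%C.
Proof.
  intros <- <-. unfold dp, dm. split; [apply dRe_pm|apply dIm_pm].
Qed.

Lemma Cminus_neq (a b : C) : a <> b -> (a - b)%C <> 0%C.
Proof. intros H E. apply H. replace a with (a - b + b)%C by ring. rewrite E. ring. Qed.

Lemma hess (lam mu_p mu_m : C -> C) (z0 : C) (eps t0 : R) :
  0 < eps -> Ck_on 2 (Cball z0 eps) lam -> Ck_on 2 (Cball z0 eps) mu_p ->
  Ck_on 2 (Cball z0 eps) mu_m ->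
  (forall z, Cball z0 eps z -> lam z <> lam_minus lam z) ->
  (forall z, Cball z0 eps z ->
     dm mu_p z = Cmult (Cdiv (Cminus (mu_p z) (mu_m z))
                             (Cminus (lam z) (lam_minus lam z))) (dm lam z) /\
     dp mu_m z = Cmult (Cdiv (Cminus (mu_p z) (mu_m z))
                             (Cminus (lam z) (lam_minus lam z)))
                       (dp (lam_minus lam) z)) ->
  Cminus (mu_p z0) (mu_m z0) = Cmult (RtoC t0) (Cminus (lam z0) (lam_minus lam z0)) ->
  dp mu_p z0 = Cmult (RtoC t0) (dp lam z0) ->
  dm mu_m z0 = Cmult (RtoC t0) (dm (lam_minus lam) z0) ->
  (dRe mu_p z0 = (t0 * dRe lam z0)%C /\ dIm mu_p z0 = (t0 * dIm lam z0)%C) /\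
  (dRe mu_m z0 = (t0 * Cconj (dRe lam z0))%C /\ dIm mu_m z0 = (t0 * Cconj (dIm lam z0))%C) /\
  ((dRe (dRe mu_p) z0 - t0 * dRe (dRe lam) z0) + Ci * (dRe (dIm mu_p) z0 - t0 * dRe (dIm lam) z0) = 0)%C /\
  ((dIm (dRe mu_p) z0 - t0 * dIm (dRe lam) z0) + Ci * (dIm (dIm mu_p) z0 - t0 * dIm (dIm lam) z0) = 0)%C /\
  ((dRe (dRe mu_m) z0 - t0 * Cconj (dRe (dRe lam) z0)) - Ci * (dRe (dIm mu_m) z0 - t0 * Cconj (dRe (dIm lam) z0)) = 0)%C /\
  ((dIm (dRe mu_m) z0 - t0 * Cconj (dIm (dRe lam) z0)) - Ci * (dIm (dIm mu_m) z0 - t0 * Cconj (dIm (dIm lam) z0)) = 0)%C.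
Proof.
  intros Heps Hl Hp Hm Hne Hpde Hhod Hbp Hbm.
  assert (Hz0 : Cball z0 eps z0) by (unfold Cball; replace (Cminus z0 z0) with (RtoC 0) by ring; rewrite Cmod_0; exact Heps).
  assert (HD0 : (lam z0 - lam_minus lam z0)%C <> 0%C) by (apply Cminus_neq, Hne, Hz0).
  assert (Hratio : Cdiv (Cminus (mu_p z0) (mu_m z0)) (Cminus (lam z0) (lam_minus lam z0)) = RtoC t0).
  { rewrite Hhod. unfold Cdiv. field. exact HD0. }
  destruct (Hpde z0 Hz0) as [E1 E2]. rewrite Hratio in E1, E2.
  destruct (pm_split mu_p z0 _ _ Hbp E1) as [A1 A2].
  destruct (pm_split lam z0 _ _ eq_refl eq_refl) as [L1 L2].
  destruct (pm_split mu_m z0 _ _ E2 Hbm) as [M1 M2].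
  destruct (pm_split (lam_minus lam) z0 _ _ eq_refl eq_refl) as [C1 C2].
  rewrite dRe_conj in C1. rewrite dIm_conj in C2.
  assert (HA : dRe mu_p z0 = (t0 * dRe lam z0)%C /\ dIm mu_p z0 = (t0 * dIm lam z0)%C).
  { rewrite A1, A2, L1, L2. split; ring. }
  assert (HB : dRe mu_m z0 = (t0 * Cconj (dRe lam z0))%C /\ dIm mu_m z0 = (t0 * Cconj (dIm lam z0))%C).
  { rewrite M1, M2, C1, C2. split; ring. }
  split; [exact HA|split; [exact HB|]].
  destruct HA as [HA1 HA2]. destruct HB as [HB1 HB2].
  destruct (Ck2_exd _ _ _ Hl Hz0) as [Xl [Xl1 Xl2]].
  destruct (Ck2_exd _ _ _ Hp Hz0) as [Xp [Xp1 Xp2]].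
  destruct (Ck2_exd _ _ _ Hm Hz0) as [Xm [Xm1 Xm2]].
  assert (Id1 : forall w, Cball z0 eps w ->
    ((dm mu_p w - t0 * dm lam w) * (lam w - lam_minus lam w) =
     ((mu_p w - mu_m w) - t0 * (lam w - lam_minus lam w)) * dm lam w)%C).
  { intros w Hw. destruct (Hpde w Hw) as [F1 _]. rewrite F1. unfold Cdiv. field.
    apply Cminus_neq, Hne, Hw. }
  assert (Id2 : forall w, Cball z0 eps w ->
    ((dp mu_m w - t0 * dp (lam_minus lam) w) * (lam w - lam_minus lam w) =
     ((mu_p w - mu_m w) - t0 * (lam w - lam_minus lam w)) * dp (lam_minus lam) w)%C).
  { intros w Hw. destruct (Hpde w Hw) as [_ F2]. rewrite F2. unfold Cdiv. field.
    apply Cminus_neq, Hne, Hw. }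
  assert (P0 : (dm mu_p z0 - t0 * dm lam z0 = 0)%C) by (rewrite E1; ring).
  assert (P0' : (dp mu_m z0 - t0 * dp (lam_minus lam) z0 = 0)%C) by (rewrite E2; ring).
  assert (K0 : ((mu_p z0 - mu_m z0) - t0 * (lam z0 - lam_minus lam z0) = 0)%C)
    by (rewrite Hhod; ring).
  assert (Hd : 0 < eps / 2) by lra.
  destruct z0 as [x0 y0].
  assert (CK1 : cder (fun t => ((mu_p (t, y0) - mu_m (t, y0)) - t0 * (lam (t, y0) - lam_minus lam (t, y0)))%C) x0
     ((dRe mu_p (x0,y0) - dRe mu_m (x0,y0)) - t0 * (dRe lam (x0,y0) - Cconj (dRe lam (x0,y0))))%C).
  { apply cder_minus; [apply cder_minus; [apply (cder_s1 _ (x0,y0) Xp)|apply (cder_s1 _ (x0,y0) Xm)]|].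
    apply cder_scal, cder_minus; [apply (cder_s1 _ (x0,y0) Xl)|apply cder_conj, (cder_s1 _ (x0,y0) Xl)]. }
  assert (CK2 : cder (fun t => ((mu_p (x0, t) - mu_m (x0, t)) - t0 * (lam (x0, t) - lam_minus lam (x0, t)))%C) y0
     ((dIm mu_p (x0,y0) - dIm mu_m (x0,y0)) - t0 * (dIm lam (x0,y0) - Cconj (dIm lam (x0,y0))))%C).
  { apply cder_minus; [apply cder_minus; [apply (cder_s2 _ (x0,y0) Xp)|apply (cder_s2 _ (x0,y0) Xm)]|].
    apply cder_scal, cder_minus; [apply (cder_s2 _ (x0,y0) Xl)|apply cder_conj, (cder_s2 _ (x0,y0) Xl)]. }
  assert (CQ1 : cder (fun t => (lam (t, y0) - lam_minus lam (t, y0))%C) x0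
     (dRe lam (x0,y0) - Cconj (dRe lam (x0,y0)))%C).
  { apply cder_minus; [apply (cder_s1 _ (x0,y0) Xl)|apply cder_conj, (cder_s1 _ (x0,y0) Xl)]. }
  assert (CQ2 : cder (fun t => (lam (x0, t) - lam_minus lam (x0, t))%C) y0
     (dIm lam (x0,y0) - Cconj (dIm lam (x0,y0)))%C).
  { apply cder_minus; [apply (cder_s2 _ (x0,y0) Xl)|apply cder_conj, (cder_s2 _ (x0,y0) Xl)]. }
  assert (R1 : ((dRe mu_p (x0,y0) - dRe mu_m (x0,y0)) - t0 * (dRe lam (x0,y0) - Cconj (dRe lam (x0,y0))) = 0)%C)
    by (rewrite HA1, HB1; ring).
  assert (R2 : ((dIm mu_p (x0,y0) - dIm mu_m (x0,y0)) - t0 * (dIm lam (x0,y0) - Cconj (dIm lam (x0,y0))) = 0)%C)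
    by (rewrite HA2, HB2; ring).
  assert (S1 : forall t, Rabs (t - x0) < eps / 2 -> Cball (x0,y0) eps (t, y0))
    by (intros t Ht; apply (Cball_s1 (x0,y0)); auto).
  assert (S2 : forall t, Rabs (t - y0) < eps / 2 -> Cball (x0,y0) eps (x0, t))
    by (intros t Ht; apply (Cball_s2 (x0,y0)); auto).
  split; [|split; [|split]].
  -
    assert (p0 : (RtoC (/2) * (dRe (dRe mu_p) (x0,y0) + Ci * dRe (dIm mu_p) (x0,y0)) - t0 * (RtoC (/2) * (dRe (dRe lam) (x0,y0) + Ci * dRe (dIm lam) (x0,y0))) = 0)%C).
    { eapply (kill_deriv (fun w => dm mu_p w - t0 * dm lam w)%C (fun w => lam w - lam_minus lam w)%C
      (fun w => (mu_p w - mu_m w) - t0 * (lam w - lam_minus lam w))%C (dm lam) (fun t => (t, y0)) x0 (eps/2)); [exact Hd | exact (fun t Ht => Id1 _ (S1 t Ht)) | | exact CQ1 | exact CK1 | apply (cder_dm_s1 _ (x0,y0) Xl1 Xl2) | exact P0 | exact K0 | exact R1 | exact HD0].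
      apply cder_minus; [apply (cder_dm_s1 _ (x0,y0) Xp1 Xp2)|apply cder_scal, (cder_dm_s1 _ (x0,y0) Xl1 Xl2)]. }
    rewrite <- (Cmult_0_r (RtoC 2)), <- p0. unfold RtoC. apply injective_projections; simpl; field.
  - assert (p0 : (RtoC (/2) * (dIm (dRe mu_p) (x0,y0) + Ci * dIm (dIm mu_p) (x0,y0)) - t0 * (RtoC (/2) * (dIm (dRe lam) (x0,y0) + Ci * dIm (dIm lam) (x0,y0))) = 0)%C).
    { eapply (kill_deriv (fun w => dm mu_p w - t0 * dm lam w)%C (fun w => lam w - lam_minus lam w)%C
      (fun w => (mu_p w - mu_m w) - t0 * (lam w - lam_minus lam w))%C (dm lam) (fun t => (x0, t)) y0 (eps/2)); [exact Hd | exact (fun t Ht => Id1 _ (S2 t Ht)) | | exact CQ2 | exact CK2 | apply (cder_dm_s2 _ (x0,y0) Xl1 Xl2) | exact P0 | exact K0 | exact R2 | exact HD0].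
      apply cder_minus; [apply (cder_dm_s2 _ (x0,y0) Xp1 Xp2)|apply cder_scal, (cder_dm_s2 _ (x0,y0) Xl1 Xl2)]. }
    rewrite <- (Cmult_0_r (RtoC 2)), <- p0. unfold RtoC. apply injective_projections; simpl; field.
  - assert (p0 : (RtoC (/2) * (dRe (dRe mu_m) (x0,y0) - Ci * dRe (dIm mu_m) (x0,y0)) - t0 * (RtoC (/2) * (Cconj (dRe (dRe lam) (x0,y0)) - Ci * Cconj (dRe (dIm lam) (x0,y0)))) = 0)%C).
    { eapply (kill_deriv (fun w => dp mu_m w - t0 * dp (lam_minus lam) w)%C (fun w => lam w - lam_minus lam w)%C
      (fun w => (mu_p w - mu_m w) - t0 * (lam w - lam_minus lam w))%C (dp (lam_minus lam)) (fun t => (t, y0)) x0 (eps/2)); [exact Hd | exact (fun t Ht => Id2 _ (S1 t Ht)) | | exact CQ1 | exact CK1 | apply (cder_dpc_s1 _ (x0,y0) Xl1 Xl2) | exact P0' | exact K0 | exact R1 | exact HD0].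
      apply cder_minus; [apply (cder_dp_s1 _ (x0,y0) Xm1 Xm2)|apply cder_scal, (cder_dpc_s1 _ (x0,y0) Xl1 Xl2)]. }
    rewrite <- (Cmult_0_r (RtoC 2)), <- p0. unfold RtoC. apply injective_projections; simpl; field.
  - assert (p0 : (RtoC (/2) * (dIm (dRe mu_m) (x0,y0) - Ci * dIm (dIm mu_m) (x0,y0)) - t0 * (RtoC (/2) * (Cconj (dIm (dRe lam) (x0,y0)) - Ci * Cconj (dIm (dIm lam) (x0,y0)))) = 0)%C).
    { eapply (kill_deriv (fun w => dp mu_m w - t0 * dp (lam_minus lam) w)%C (fun w => lam w - lam_minus lam w)%C
      (fun w => (mu_p w - mu_m w) - t0 * (lam w - lam_minus lam w))%C (dp (lam_minus lam)) (fun t => (x0, t)) y0 (eps/2)); [exact Hd | exact (fun t Ht => Id2 _ (S2 t Ht)) | | exact CQ2 | exact CK2 | apply (cder_dpc_s2 _ (x0,y0) Xl1 Xl2) | exact P0' | exact K0 | exact R2 | exact HD0].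
      apply cder_minus; [apply (cder_dp_s2 _ (x0,y0) Xm1 Xm2)|apply cder_scal, (cder_dpc_s2 _ (x0,y0) Xl1 Xl2)]. }
    rewrite <- (Cmult_0_r (RtoC 2)), <- p0. unfold RtoC. apply injective_projections; simpl; field.
Qed.

Lemma schwarzC (g : C -> C) z0 eps : 0 < eps -> Ck_on 2 (Cball z0 eps) g ->
  dRe (dIm g) z0 = dIm (dRe g) z0.
Proof.
  intros Heps [Hg [[Hg1 [Hg11 Hg12]] [Hg2 [Hg21 Hg22]]]].
  destruct z0 as [x0 y0].
  assert (Hsq : forall x y, Rabs (x - x0) < eps/2 -> Rabs (y - y0) < eps/2 -> Cball (x0,y0) eps (x,y))
    by (intros; apply Cball_sq; auto).
  assert (Hc0 : Cball (x0,y0) eps (x0,y0)) by (apply Hsq; rewrite Rminus_eq_0, Rabs_R0; lra).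
  assert (Hd : 0 < eps / 2) by lra.
  assert (Loc : forall u : R -> R -> R,
    (forall x y, Cball (x0,y0) eps (x,y) ->
      ex_derive (fun z => u z y) x /\ ex_derive (fun z => u x z) y /\
      ex_derive (fun z => Derive (fun t => u z t) y) x /\ ex_derive (fun z => Derive (fun t => u t z) x) y) ->
    locally_2d (fun x y => ex_derive (fun z => u z y) x /\ ex_derive (fun z => u x z) y /\
      ex_derive (fun z => Derive (fun t => u z t) y) x /\ ex_derive (fun z => Derive (fun t => u t z) x) y) x0 y0).
  { intros u Hu. exists (mkposreal _ Hd). intros x y Hx Hy. apply Hu, Hsq; assumption. }
  apply injective_projections.
  - simpl. apply (Schwarz (ur g) x0 y0).
    + apply Loc. intros x y Hxy.
      destruct (Hg _ Hxy) as [A [_ [B _]]]. destruct (Hg2 _ Hxy) as [C0 _]. destruct (Hg1 _ Hxy) as [_ [_ [D _]]].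
      split; [exact A|split; [exact B|split; [exact C0|exact D]]].
    + intros e. destruct (cont_C_eps _ _ (Hg21 _ Hc0) e (cond_pos e)) as [d [Hd' D]].
      exists (mkposreal d Hd'). intros u v Hu Hv. exact (proj1 (D u v Hu Hv)).
    + intros e. destruct (cont_C_eps _ _ (Hg12 _ Hc0) e (cond_pos e)) as [d [Hd' D]].
      exists (mkposreal d Hd'). intros u v Hu Hv. exact (proj1 (D u v Hu Hv)).
  - simpl. apply (Schwarz (ui g) x0 y0).
    + apply Loc. intros x y Hxy.
      destruct (Hg _ Hxy) as [_ [A [_ B]]]. destruct (Hg2 _ Hxy) as [_ [C0 _]]. destruct (Hg1 _ Hxy) as [_ [_ [_ D]]].
      split; [exact A|split; [exact B|split; [exact C0|exact D]]].
    + intros e. destruct (cont_C_eps _ _ (Hg21 _ Hc0) e (cond_pos e)) as [d [Hd' D]].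
      exists (mkposreal d Hd'). intros u v Hu Hv. exact (proj2 (D u v Hu Hv)).
    + intros e. destruct (cont_C_eps _ _ (Hg12 _ Hc0) e (cond_pos e)) as [d [Hd' D]].
      exists (mkposreal d Hd'). intros u v Hu Hv. exact (proj2 (D u v Hu Hv)).
Qed.

Definition expn (f : C -> C) (z0 c1 c2 c11 c12 c22 : C) :=
  forall e, 0 < e -> exists d, 0 < d /\ forall a b, Rabs a < d -> Rabs b < d ->
  Cmod (f ((Re z0 + a)%R, (Im z0 + b)%R) - f z0 - RtoC a * c1 - RtoC b * c2
        - RtoC (/2 * a^2) * c11 - RtoC (a * b) * c12
        - RtoC (/2 * b^2) * c22)%C <= e * (a^2 + b^2).

Lemma expn_peano f z0 eps : 0 < eps -> Ck_on 2 (Cball z0 eps) f ->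
  expn f z0 (dRe f z0) (dIm f z0) (dRe (dRe f) z0) (dRe (dIm f) z0) (dIm (dIm f) z0).
Proof. intros. intros e He. apply (peanoC f z0 eps); assumption. Qed.

Lemma expn_conj f z0 c1 c2 c11 c12 c22 : expn f z0 c1 c2 c11 c12 c22 ->
  expn (lam_minus f) z0 (Cconj c1) (Cconj c2) (Cconj c11) (Cconj c12) (Cconj c22).
Proof.
  intros H e He. destruct (H e He) as [d [Hd D]]. exists d. split; [exact Hd|].
  intros a b Ha Hb. specialize (D a b Ha Hb). rewrite <- Cmod_conj in D.
  eapply Rle_trans; [|exact D]. right. f_equal. unfold lam_minus, Cconj, RtoC.
  apply injective_projections; simpl; ring.
Qed.

Lemma im_le_Cmod' (c : C) : Rabs (Im c) <= Cmod c.
Proof.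
  unfold Cmod. rewrite <- sqrt_Rsqr_abs. apply sqrt_le_1_alt. unfold Rsqr, Im.
  pose proof (pow2_ge_0 (fst c)). simpl. nra.
Qed.

Lemma Cmod_sq (h : C) : Re h ^ 2 + Im h ^ 2 = Cmod h ^ 2.
Proof. rewrite Cmod2_alt. reflexivity. Qed.

Lemma Cplus_pair (z h : C) : (z + h)%C = ((Re z + Re h)%R, (Im z + Im h)%R).
Proof. reflexivity. Qed.

Lemma combine (f g : C -> C) (z0 : C) (t0 : R) (A : C) (w : C -> C)
  f1 f2 f11 f12 f22 g1 g2 g11 g12 g22 :
  expn f z0 f1 f2 f11 f12 f22 -> expn g z0 g1 g2 g11 g12 g22 ->
  (forall a b : R, (RtoC a * (f1 - t0 * g1) + RtoC b * (f2 - t0 * g2)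
     + RtoC (/2 * a^2) * (f11 - t0 * g11) + RtoC (a * b) * (f12 - t0 * g12)
     + RtoC (/2 * b^2) * (f22 - t0 * g22))%C = (RtoC (/2) * A * w (a, b) * w (a, b))%C) ->
  forall e, 0 < e -> exists d, 0 < d /\ forall h, Cmod h < d ->
  Cmod (f (z0 + h) - f z0 - t0 * (g (z0 + h) - g z0) - RtoC (/2) * A * w h * w h)%C
     <= e * Cmod h ^ 2.
Proof.
  intros Hf Hg Halg e He.
  assert (He' : 0 < e / (1 + Rabs t0)) by (apply Rdiv_lt_0_compat; [lra|pose proof (Rabs_pos t0); lra]).
  destruct (Hf _ He') as [d1 [Hd1 D1]]. destruct (Hg _ He') as [d2 [Hd2 D2]].
  exists (Rmin d1 d2). split; [apply Rmin_glb_lt; lra|].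
  intros h Hh. destruct h as [a b].
  assert (Ha : Rabs a < Rmin d1 d2) by (eapply Rle_lt_trans; [apply (re_le_Cmod (a,b))|exact Hh]).
  assert (Hb : Rabs b < Rmin d1 d2) by (eapply Rle_lt_trans; [apply (im_le_Cmod' (a,b))|exact Hh]).
  specialize (D1 a b (Rlt_le_trans _ _ _ Ha (Rmin_l _ _)) (Rlt_le_trans _ _ _ Hb (Rmin_l _ _))).
  specialize (D2 a b (Rlt_le_trans _ _ _ Ha (Rmin_r _ _)) (Rlt_le_trans _ _ _ Hb (Rmin_r _ _))).
  rewrite Cplus_pair. simpl Re. simpl Im.
  rewrite <- Cmod_sq. simpl Re; simpl Im.
  set (Ef := (f ((Re z0 + a)%R, (Im z0 + b)%R) - f z0 - RtoC a * f1 - RtoC b * f2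
        - RtoC (/2 * a^2) * f11 - RtoC (a * b) * f12 - RtoC (/2 * b^2) * f22)%C) in D1.
  set (Eg := (g ((Re z0 + a)%R, (Im z0 + b)%R) - g z0 - RtoC a * g1 - RtoC b * g2
        - RtoC (/2 * a^2) * g11 - RtoC (a * b) * g12 - RtoC (/2 * b^2) * g22)%C) in D2.
  replace (f ((Re z0 + a)%R, (Im z0 + b)%R) - f z0 - t0 * (g ((Re z0 + a)%R, (Im z0 + b)%R) - g z0)
       - RtoC (/2) * A * w (a, b) * w (a, b))%C with (Ef - t0 * Eg)%C.
  2: { rewrite <- Halg. unfold Ef, Eg. ring. }
  eapply Rle_trans; [apply Cmod_triangle|]. rewrite Cmod_opp, Cmod_mult, Cmod_R.
  assert (0 <= a^2 + b^2) by nra.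
  assert (Rabs t0 * Cmod Eg <= Rabs t0 * (e / (1 + Rabs t0) * (a ^ 2 + b ^ 2)))
    by (apply Rmult_le_compat_l; [apply Rabs_pos|exact D2]).
  assert (e / (1 + Rabs t0) * (a ^ 2 + b ^ 2) + Rabs t0 * (e / (1 + Rabs t0) * (a ^ 2 + b ^ 2))
           = e * (a^2 + b^2)) by (field; pose proof (Rabs_pos t0); lra).
  lra.
Qed.

Lemma Cmod_tri5 (x y z u v : C) : Cmod (x + y + z + u + v)%C <= Cmod x + Cmod y + Cmod z + Cmod u + Cmod v.
Proof.
  pose proof (Cmod_triangle (x + y + z + u) v). pose proof (Cmod_triangle (x + y + z) u).
  pose proof (Cmod_triangle (x + y) z). pose proof (Cmod_triangle x y). lra.
Qed.

Lemma lipschitz f z0 c1 c2 c11 c12 c22 : expn f z0 c1 c2 c11 c12 c22 ->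
  exists K d, 0 < d /\ 0 <= K /\ forall h, Cmod h < d -> Cmod (f (z0 + h) - f z0)%C <= K * Cmod h.
Proof.
  intros Hf. destruct (Hf 1 Rlt_0_1) as [d [Hd D]].
  exists (Cmod c1 + Cmod c2 + Cmod c11 + Cmod c12 + Cmod c22 + 1), (Rmin d 1).
  pose proof (Cmod_ge_0 c1); pose proof (Cmod_ge_0 c2); pose proof (Cmod_ge_0 c11);
  pose proof (Cmod_ge_0 c12); pose proof (Cmod_ge_0 c22).
  split; [apply Rmin_glb_lt; lra|]. split; [lra|].
  intros h Hh. destruct h as [a b].
  pose proof (Cmod_ge_0 (a,b)) as Hh0.
  assert (Ha : Rabs a <= Cmod (a,b)) by apply (re_le_Cmod (a,b)).
  assert (Hb : Rabs b <= Cmod (a,b)) by apply (im_le_Cmod' (a,b)).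
  assert (Hl1 : Cmod (a,b) < 1) by (eapply Rlt_le_trans; [exact Hh|apply Rmin_r]).
  assert (Hl2 : Cmod (a,b) < d) by (eapply Rlt_le_trans; [exact Hh|apply Rmin_l]).
  specialize (D a b ltac:(lra) ltac:(lra)).
  rewrite Cplus_pair. simpl Re; simpl Im.
  set (E := (f ((Re z0 + a)%R, (Im z0 + b)%R) - f z0 - RtoC a * c1 - RtoC b * c2
        - RtoC (/2 * a^2) * c11 - RtoC (a * b) * c12 - RtoC (/2 * b^2) * c22)%C) in D.
  replace (f ((Re z0 + a)%R, (Im z0 + b)%R) - f z0)%C with
    (E + (RtoC a * c1 + RtoC b * c2 + RtoC (/2 * a^2) * c11 + RtoC (a * b) * c12 + RtoC (/2 * b^2) * c22))%C
    by (unfold E; ring).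
  set (m := Cmod (a,b)) in *.
  assert (Hsq : a^2 + b^2 = m^2) by (unfold m; rewrite <- Cmod_sq; reflexivity).
  assert (Hab : Rabs a * Rabs b <= m * m) by (apply Rmult_le_compat; try apply Rabs_pos; lra).
  assert (Ha2 : Rabs (/2 * a^2) <= m * m).
  { rewrite Rabs_right by nra.
    assert (HH : Rabs a * Rabs a <= m * m) by (apply Rmult_le_compat; try apply Rabs_pos; lra).
    rewrite <- Rabs_mult in HH. rewrite Rabs_right in HH by nra. simpl. nra. }
  assert (Hb2 : Rabs (/2 * b^2) <= m * m).
  { rewrite Rabs_right by nra.
    assert (HH : Rabs b * Rabs b <= m * m) by (apply Rmult_le_compat; try apply Rabs_pos; lra).
    rewrite <- Rabs_mult in HH. rewrite Rabs_right in HH by nra. simpl. nra. }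
  eapply Rle_trans; [apply Cmod_triangle|].
  eapply Rle_trans; [apply Rplus_le_compat_l, Cmod_tri5|].
  rewrite !Cmod_mult, !Cmod_R. rewrite (Rabs_mult a b).
  assert (Rabs a * Cmod c1 <= m * Cmod c1) by (apply Rmult_le_compat_r; lra).
  assert (Rabs b * Cmod c2 <= m * Cmod c2) by (apply Rmult_le_compat_r; lra).
  assert (Rabs (/2 * a^2) * Cmod c11 <= m * Cmod c11) by (apply Rmult_le_compat_r; nra).
  assert (Rabs a * Rabs b * Cmod c12 <= m * Cmod c12) by (apply Rmult_le_compat_r; nra).
  assert (Rabs (/2 * b^2) * Cmod c22 <= m * Cmod c22) by (apply Rmult_le_compat_r; nra).
  assert (Cmod E <= m) by nra.
  lra.
Qed.

Lemma cder_dRe F z l : cder (fun t => F (t, Im z)) (Re z) l -> dRe F z = l.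
Proof.
  intros [A B]. apply is_derive_unique in A, B. unfold dRe. destruct l as [l1 l2]. simpl in A, B. f_equal; [exact A|exact B].
Qed.
Lemma cder_dIm F z l : cder (fun t => F (Re z, t)) (Im z) l -> dIm F z = l.
Proof.
  intros [A B]. apply is_derive_unique in A, B. unfold dIm. destruct l as [l1 l2]. simpl in A, B. f_equal; [exact A|exact B].
Qed.

Definition wform_p (f11 f12 f21 f22 : C) : C :=
  (RtoC (/2) * (RtoC (/2) * (f11 - Ci * f12) - Ci * (RtoC (/2) * (f21 - Ci * f22))))%C.
Definition wform_m (f11 f12 f21 f22 : C) : C :=
  (RtoC (/2) * (RtoC (/2) * (f11 + Ci * f12) + Ci * (RtoC (/2) * (f21 + Ci * f22))))%C.

Lemma dpdp_eq f z : exd (dRe f) z -> exd (dIm f) z ->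
  dp (dp f) z = wform_p (dRe (dRe f) z) (dRe (dIm f) z) (dIm (dRe f) z) (dIm (dIm f) z).
Proof.
  intros A B. change (dp (dp f) z) with (RtoC (/2) * (dRe (dp f) z - Ci * dIm (dp f) z))%C.
  rewrite (cder_dRe _ _ _ (cder_dp_s1 f z A B)), (cder_dIm _ _ _ (cder_dp_s2 f z A B)). reflexivity.
Qed.

Lemma dmdm_eq f z : exd (dRe f) z -> exd (dIm f) z ->
  dm (dm f) z = wform_m (dRe (dRe f) z) (dRe (dIm f) z) (dIm (dRe f) z) (dIm (dIm f) z).
Proof.
  intros A B. change (dm (dm f) z) with (RtoC (/2) * (dRe (dm f) z + Ci * dIm (dm f) z))%C.
  rewrite (cder_dRe _ _ _ (cder_dm_s1 f z A B)), (cder_dIm _ _ _ (cder_dm_s2 f z A B)). reflexivity.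
Qed.

Lemma cder_dmc_s1 f z : exd (dRe f) z -> exd (dIm f) z ->
  cder (fun t => dm (lam_minus f) (t, Im z)) (Re z)
    (RtoC (/2) * (Cconj (dRe (dRe f) z) + Ci * Cconj (dRe (dIm f) z)))%C.
Proof.
  intros A B.
  apply (cder_ext_loc (fun t => RtoC (/2) * (Cconj (dRe f (t, Im z)) + Ci * Cconj (dIm f (t, Im z))))%C _ _ _ 1);
    [lra| intros t _; unfold dm; rewrite dRe_conj, dIm_conj; reflexivity|].
  apply cder_scal, cder_plus; [apply cder_conj, cder_s1, A|apply cder_scal, cder_conj, cder_s1, B].
Qed.
Lemma cder_dmc_s2 f z : exd (dRe f) z -> exd (dIm f) z ->
  cder (fun t => dm (lam_minus f) (Re z, t)) (Im z)
    (RtoC (/2) * (Cconj (dIm (dRe f) z) + Ci * Cconj (dIm (dIm f) z)))%C.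
Proof.
  intros A B.
  apply (cder_ext_loc (fun t => RtoC (/2) * (Cconj (dRe f (Re z, t)) + Ci * Cconj (dIm f (Re z, t))))%C _ _ _ 1);
    [lra| intros t _; unfold dm; rewrite dRe_conj, dIm_conj; reflexivity|].
  apply cder_scal, cder_plus; [apply cder_conj, cder_s2, A|apply cder_scal, cder_conj, cder_s2, B].
Qed.

Lemma dmdmc_eq f z : exd (dRe f) z -> exd (dIm f) z ->
  dm (dm (lam_minus f)) z = wform_m (Cconj (dRe (dRe f) z)) (Cconj (dRe (dIm f) z))
                                    (Cconj (dIm (dRe f) z)) (Cconj (dIm (dIm f) z)).
Proof.
  intros A B. change (dm (dm (lam_minus f)) z) with
    (RtoC (/2) * (dRe (dm (lam_minus f)) z + Ci * dIm (dm (lam_minus f)) z))%C.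
  rewrite (cder_dRe _ _ _ (cder_dmc_s1 f z A B)), (cder_dIm _ _ _ (cder_dmc_s2 f z A B)). reflexivity.
Qed.

Lemma alg_plus (t0 : R) (f1 f2 f11 f12 f21 f22 g1 g2 g11 g12 g21 g22 : C) (a b : R) :
  f1 = (t0 * g1)%C -> f2 = (t0 * g2)%C ->
  ((f11 - t0 * g11) + Ci * (f12 - t0 * g12) = 0)%C ->
  ((f21 - t0 * g21) + Ci * (f22 - t0 * g22) = 0)%C ->
  f12 = f21 -> g12 = g21 ->
  (RtoC a * (f1 - t0 * g1) + RtoC b * (f2 - t0 * g2)
     + RtoC (/2 * a^2) * (f11 - t0 * g11) + RtoC (a * b) * (f12 - t0 * g12)
     + RtoC (/2 * b^2) * (f22 - t0 * g22))%C
  = (RtoC (/2) * (wform_p f11 f12 f21 f22 - t0 * wform_p g11 g12 g21 g22) * (a, b) * (a, b))%C.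
Proof.
  intros H1 H2 H3 H4 H5 H6.
  assert (E11 : f11 = (t0 * g11 - Ci * (f12 - t0 * g12))%C).
  { replace f11 with ((f11 - t0 * g11 + Ci * (f12 - t0 * g12)) - Ci * (f12 - t0 * g12) + t0 * g11)%C by ring.
    rewrite H3. ring. }
  assert (E22 : f22 = (t0 * g22 + Ci * (f21 - t0 * g21))%C).
  { replace f22 with (t0 * g22 + Ci * (f21 - t0 * g21) - Ci * ((f21 - t0 * g21) + Ci * (f22 - t0 * g22)))%C.
    - rewrite H4. ring.
    - unfold Ci. destruct f21, f22, g21, g22. apply injective_projections; simpl; ring. }
  rewrite E11, E22, H1, H2, <- H5, <- H6. unfold wform_p, Ci, RtoC.
  destruct f12, g1, g2, g11, g12, g22. apply injective_projections; simpl; field.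
Qed.

Lemma alg_minus (t0 : R) (f1 f2 f11 f12 f21 f22 g1 g2 g11 g12 g21 g22 : C) (a b : R) :
  f1 = (t0 * g1)%C -> f2 = (t0 * g2)%C ->
  ((f11 - t0 * g11) - Ci * (f12 - t0 * g12) = 0)%C ->
  ((f21 - t0 * g21) - Ci * (f22 - t0 * g22) = 0)%C ->
  f12 = f21 -> g12 = g21 ->
  (RtoC a * (f1 - t0 * g1) + RtoC b * (f2 - t0 * g2)
     + RtoC (/2 * a^2) * (f11 - t0 * g11) + RtoC (a * b) * (f12 - t0 * g12)
     + RtoC (/2 * b^2) * (f22 - t0 * g22))%C
  = (RtoC (/2) * (wform_m f11 f12 f21 f22 - t0 * wform_m g11 g12 g21 g22)
       * Cconj (a, b) * Cconj (a, b))%C.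
Proof.
  intros H1 H2 H3 H4 H5 H6.
  assert (E11 : f11 = (t0 * g11 + Ci * (f12 - t0 * g12))%C).
  { replace f11 with ((f11 - t0 * g11 - Ci * (f12 - t0 * g12)) + Ci * (f12 - t0 * g12) + t0 * g11)%C by ring.
    rewrite H3. ring. }
  assert (E22 : f22 = (t0 * g22 - Ci * (f21 - t0 * g21))%C).
  { replace f22 with (t0 * g22 - Ci * (f21 - t0 * g21) + Ci * ((f21 - t0 * g21) - Ci * (f22 - t0 * g22)))%C.
    - rewrite H4. ring.
    - unfold Ci. destruct f21, f22, g21, g22. apply injective_projections; simpl; ring. }
  rewrite E11, E22, H1, H2, <- H5, <- H6. unfold wform_m, Ci, RtoC, Cconj.
  destruct f12, g1, g2, g11, g12, g22. apply injective_projections; simpl; field.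
Qed.

Lemma eps_cont (f : R -> R) x : continuity_pt f x ->
  forall e, 0 < e -> exists d, 0 < d /\ forall y, Rabs (y - x) < d -> Rabs (f y - f x) < e.
Proof.
  intros H e He. destruct (H e He) as [a [Ha Hb]]. exists a. split; [lra|].
  intros y Hy. destruct (Req_dec y x) as [->|Hn].
  - rewrite Rminus_eq_0, Rabs_R0. exact He.
  - apply (Hb y). split; [split; [exact I|auto]|exact Hy].
Qed.

Lemma cont_from_eps (f : R -> R) x :
  (forall e, 0 < e -> exists d, 0 < d /\ forall y, Rabs (y - x) < d -> Rabs (f y - f x) < e) ->
  continuity_pt f x.
Proof.
  intros H e He. destruct (H e He) as [d [Hd D]]. exists d. split; [lra|].
  intros y [_ Hy]. apply D, Hy.
Qed.

Lemma csqrt (c : C) : exists s, (s * s)%C = c.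
Proof.
  pose proof (re_le_Cmod c) as H1. pose proof (Rabs_le_between' (Re c) 0 (Cmod c)) as H2.
  assert (HA : 0 <= (Cmod c + Re c) / 2) by (pose proof (Rle_abs (Re c)); pose proof (Rabs_le (Re c)); unfold Rabs in H1; destruct Rcase_abs; lra).
  assert (HB : 0 <= (Cmod c - Re c) / 2) by (unfold Rabs in H1; destruct Rcase_abs; lra).
  assert (HC : Cmod c ^ 2 = Re c ^ 2 + Im c ^ 2) by apply Cmod2_alt.
  set (sg := if Rle_dec 0 (Im c) then 1 else -1).
  exists (sqrt ((Cmod c + Re c) / 2), sg * sqrt ((Cmod c - Re c) / 2)).
  apply injective_projections; simpl.
  - replace (sg * sqrt ((Cmod c - Re c) / 2) * (sg * sqrt ((Cmod c - Re c) / 2)))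
      with ((sg * sg) * (sqrt ((Cmod c - Re c) / 2) * sqrt ((Cmod c - Re c) / 2))) by ring.
    rewrite !sqrt_sqrt by assumption.
    assert (sg * sg = 1) by (unfold sg; destruct Rle_dec; ring). rewrite H. unfold Re. lra.
  - replace (sqrt ((Cmod c + Re c) / 2) * (sg * sqrt ((Cmod c - Re c) / 2)) +
             sg * sqrt ((Cmod c - Re c) / 2) * sqrt ((Cmod c + Re c) / 2))
      with (2 * sg * (sqrt ((Cmod c + Re c) / 2) * sqrt ((Cmod c - Re c) / 2))) by ring.
    rewrite <- sqrt_mult_alt by assumption.
    replace ((Cmod c + Re c) / 2 * ((Cmod c - Re c) / 2)) with (Rsqr (Im c / 2))
      by (unfold Rsqr; simpl in HC; nra).
    rewrite sqrt_Rsqr_abs. unfold sg. destruct Rle_dec as [Hl|Hl].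
    + rewrite Rabs_right by lra. unfold Im. field.
    + rewrite Rabs_left by lra. unfold Im. field.
Qed.

Lemma lim_at_right (f : R -> C) (L : C) :
  (forall e, 0 < e -> exists d, 0 < d /\ forall k, 0 < k < d -> Cmod (f k - L)%C < e) ->
  filterlim f (at_right 0) (locally L).
Proof.
  intros H. apply filterlim_locally. intros e.
  destruct (H e (cond_pos e)) as [d [Hd D]].
  exists (mkposreal d Hd). intros k Hk Hk0. simpl in Hk.
  assert (Hk' : 0 < k < d).
  { unfold ball in Hk; simpl in Hk; unfold AbsRing_ball, abs, minus, plus, opp in Hk; simpl in Hk.
    rewrite Ropp_0, Rplus_0_r in Hk. unfold Rabs in Hk; destruct Rcase_abs; lra. }
  specialize (D k Hk'). destruct L as [l1 l2].
  split; simpl; unfold AbsRing_ball, abs, minus, plus, opp; simpl.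
  - eapply Rle_lt_trans; [|exact D]. apply (re_le_Cmod (f k - (l1, l2))%C).
  - eapply Rle_lt_trans; [|exact D]. apply (im_le_Cmod' (f k - (l1, l2))%C).
Qed.

Lemma Cmod_Rmult (r : R) (z : C) : Cmod (RtoC r * z)%C = Rabs r * Cmod z.
Proof. rewrite Cmod_mult, Cmod_R. reflexivity. Qed.

Lemma Re_le_Cmod' (z : C) : Re z <= Cmod z.
Proof. pose proof (re_le_Cmod z). pose proof (Rle_abs (Re z)). lra. Qed.

Lemma branch (f : R -> C) (c : C) d0 : 0 < d0 ->
  (forall k, 0 < k < d0 -> forall e, 0 < e -> exists d, 0 < d /\
     forall k', 0 < k' < d0 -> Rabs (k' - k) < d -> Cmod (f k' - f k)%C < e) ->
  (forall e, 0 < e -> exists d, 0 < d /\ forall k, 0 < k < d -> Cmod (f k * f k - c)%C < e) ->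
  exists L, (forall e, 0 < e -> exists d, 0 < d /\ forall k, 0 < k < d -> Cmod (f k - L)%C < e)
         /\ (L * L)%C = c.
Proof.
  intros Hd0 Hcont Hsq.
  destruct (Ceq_dec c 0) as [Hc0|Hc0].
  -
    exists (RtoC 0). split; [|rewrite Hc0; ring].
    intros e He. assert (He2 : 0 < e * e) by nra.
    destruct (Hsq _ He2) as [d [Hd D]]. exists d. split; [exact Hd|].
    intros k Hk. specialize (D k Hk). rewrite Hc0 in D.
    replace (f k * f k - 0)%C with (f k * f k)%C in D by ring.
    replace (f k - 0)%C with (f k) by ring.
    rewrite Cmod_mult in D. pose proof (Cmod_ge_0 (f k)). nra.
  - destruct (csqrt c) as [s0 Hs0].
    assert (Hs0n : s0 <> 0%C) by (intros E; apply Hc0; rewrite <- Hs0, E; ring).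
    set (g := fun (s : C) k => Re (Cconj s * f k)%C).
    assert (Hgc : forall s k, 0 < k < d0 -> continuity_pt (g s) k).
    { intros s k Hk. apply cont_from_eps. intros e He.
      assert (He' : 0 < e / (Cmod s + 1)) by (apply Rdiv_lt_0_compat; [lra|pose proof (Cmod_ge_0 s); lra]).
      destruct (Hcont k Hk _ He') as [d [Hd D]].
      exists (Rmin d (Rmin k (d0 - k))). split; [repeat apply Rmin_glb_lt; lra|].
      intros y Hy.
      assert (Hy1 : Rabs (y - k) < d) by (eapply Rlt_le_trans; [exact Hy|apply Rmin_l]).
      assert (Hy2 : Rabs (y - k) < Rmin k (d0 - k)) by (eapply Rlt_le_trans; [exact Hy|apply Rmin_r]).
      assert (Hy3 : 0 < y < d0).
      { pose proof (Rmin_l k (d0 - k)); pose proof (Rmin_r k (d0 - k)).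
        unfold Rabs in Hy2; destruct Rcase_abs; lra. }
      specialize (D y Hy3 Hy1). unfold g.
      replace (Re (Cconj s * f y)%C - Re (Cconj s * f k)%C) with (Re (Cconj s * (f y - f k))%C)
        by (unfold Re; simpl; ring).
      eapply Rle_lt_trans; [apply re_le_Cmod|]. rewrite Cmod_mult, Cmod_conj.
      pose proof (Cmod_ge_0 s). pose proof (Cmod_ge_0 (f y - f k)%C).
      apply Rle_lt_trans with (Cmod s * (e / (Cmod s + 1))).
      + apply Rmult_le_compat_l; lra.
      + apply Rlt_le_trans with ((Cmod s + 1) * (e / (Cmod s + 1))); [nra|].
        right; field; lra. }
    set (m := Cmod s0).
    assert (Hm : 0 < m) by (apply Cmod_gt_0, Hs0n).
    assert (Hm4 : 0 < m * m / 4) by nra.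
    destruct (Hsq _ Hm4) as [d2 [Hd2 D2]].
    set (d3 := Rmin d2 d0).
    assert (Hd3 : 0 < d3) by (apply Rmin_glb_lt; lra).
    assert (Hd3a : d3 <= d2) by apply Rmin_l. assert (Hd3b : d3 <= d0) by apply Rmin_r.
    assert (Dich : forall s, (s * s)%C = c -> Cmod s = m -> forall k, 0 < k < d3 ->
      (Cmod (f k - s)%C < m / 2 /\ m * m / 2 <= g s k) \/ (Cmod (f k + s)%C < m / 2 /\ g s k <= - (m * m / 2))).
    { intros s Hss Hms k Hk.
      assert (Hprod : Cmod (f k - s)%C * Cmod (f k + s)%C < m * m / 4).
      { rewrite <- Cmod_mult. replace ((f k - s) * (f k + s))%C with (f k * f k - c)%C
          by (rewrite <- Hss; ring). apply D2. lra. }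
      assert (Hss' : Re (Cconj s * s)%C = m * m).
      { rewrite <- Hms. destruct s as [s1 s2]. unfold Cmod, Re; simpl.
        rewrite sqrt_sqrt by nra. ring. }
      pose proof (Cmod_ge_0 (f k - s)%C). pose proof (Cmod_ge_0 (f k + s)%C).
      destruct (Rlt_dec (Cmod (f k - s)%C) (m / 2)) as [H1|H1].
      - left. split; [exact H1|]. unfold g.
        replace (Re (Cconj s * f k)%C) with (Re (Cconj s * (f k - s))%C + Re (Cconj s * s)%C)
          by (unfold Re; simpl; ring).
        rewrite Hss'. pose proof (re_le_Cmod (Cconj s * (f k - s))%C) as HH.
        rewrite Cmod_mult, Cmod_conj, Hms in HH.
        assert (m * Cmod (f k - s)%C <= m * (m / 2)) by (apply Rmult_le_compat_l; lra).
        unfold Rabs in HH; destruct Rcase_abs; lra.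
      - right.
        assert (H2 : Cmod (f k + s)%C < m / 2).
        { destruct (Rlt_dec (Cmod (f k + s)%C) (m / 2)) as [H2|H2]; [exact H2|].
          exfalso. assert (m / 2 * (m / 2) <= Cmod (f k - s)%C * Cmod (f k + s)%C)
            by (apply Rmult_le_compat; lra). lra. }
        split; [exact H2|]. unfold g.
        replace (Re (Cconj s * f k)%C) with (Re (Cconj s * (f k + s))%C - Re (Cconj s * s)%C)
          by (unfold Re; simpl; ring).
        rewrite Hss'. pose proof (re_le_Cmod (Cconj s * (f k + s))%C) as HH.
        rewrite Cmod_mult, Cmod_conj, Hms in HH.
        assert (m * Cmod (f k + s)%C <= m * (m / 2)) by (apply Rmult_le_compat_l; lra).
        unfold Rabs in HH; destruct Rcase_abs; lra. }
    set (k1 := d3 / 2).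
    assert (Hk1 : 0 < k1 < d3) by (unfold k1; lra).
    assert (Hsel : exists s, (s * s)%C = c /\ Cmod s = m /\ 0 < g s k1).
    { destruct (Dich s0 Hs0 eq_refl k1 Hk1) as [[_ G]|[_ G]].
      - exists s0. split; [exact Hs0|split; [reflexivity|nra]].
      - exists (- s0)%C. split; [rewrite <- Hs0; ring|split; [unfold m; apply Cmod_opp|]].
        unfold g in *. replace (Re (Cconj (- s0) * f k1)%C) with (- Re (Cconj s0 * f k1)%C)
          by (unfold Re; simpl; ring). nra. }
    destruct Hsel as [s [Hss [Hms Hg1]]].
    assert (Good : forall k, 0 < k < d3 -> Cmod (f k - s)%C < m / 2).
    { intros k Hk. destruct (Dich s Hss Hms k Hk) as [[A _]|[_ G]]; [exact A|exfalso].
      assert (Hgk : g s k < 0) by nra.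
      assert (Hnz : forall z, Rmin k k1 <= z <= Rmax k k1 -> g s z <> 0).
      { intros z Hz. assert (Hz' : 0 < z < d3).
        { unfold Rmin, Rmax in Hz; destruct Rle_dec; lra. }
        destruct (Dich s Hss Hms z Hz') as [[_ G']|[_ G']]; nra. }
      destruct (Rlt_dec k k1) as [Hlt|Hge].
      + destruct (Ranalysis5.IVT_interv (g s) k k1) as [z [Hz Ez]].
        * intros a Ha. apply Hgc. lra.
        * exact Hlt.
        * exact Hgk.
        * exact Hg1.
        * apply (Hnz z); [unfold Rmin, Rmax; destruct Rle_dec; lra|exact Ez].
      + assert (Hlt : k1 < k) by (destruct (Req_dec k k1) as [E|E]; [subst; lra|lra]).
        destruct (Ranalysis5.IVT_interv (fun z => - g s z) k1 k) as [z [Hz Ez]].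
        * intros a Ha. apply continuity_pt_opp, Hgc. lra.
        * exact Hlt.
        * lra.
        * lra.
        * apply (Hnz z); [unfold Rmin, Rmax; destruct Rle_dec; lra|lra]. }
    exists s. split; [|exact Hss].
    intros e He. assert (He' : 0 < Rmin (m * m / 4) (e * m)) by (apply Rmin_glb_lt; nra).
    destruct (Hsq _ He') as [d [Hd D]].
    exists (Rmin d d3). split; [apply Rmin_glb_lt; lra|].
    intros k Hk.
    assert (Hk3 : 0 < k < d3) by (pose proof (Rmin_r d d3); lra).
    assert (Hkd : 0 < k < d) by (pose proof (Rmin_l d d3); lra).
    specialize (Good k Hk3). specialize (D k Hkd).
    assert (Hp : Cmod (f k - s)%C * Cmod (f k + s)%C < e * m).
    { rewrite <- Cmod_mult. replace ((f k - s) * (f k + s))%C with (f k * f k - c)%C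
        by (rewrite <- Hss; ring). eapply Rlt_le_trans; [exact D|apply Rmin_r]. }
    assert (Hfs : m <= Cmod (f k + s)%C).
    { replace (f k + s)%C with ((RtoC 2) * s + (f k - s))%C by ring.
      pose proof (Cmod_triangle (RtoC 2 * s + (f k - s)) (- (f k - s))%C) as T.
      replace (RtoC 2 * s + (f k - s) + - (f k - s))%C with (RtoC 2 * s)%C in T by ring.
      rewrite Cmod_opp, Cmod_mult, Cmod_R, Rabs_right in T by lra. lra. }
    pose proof (Cmod_ge_0 (f k - s)%C).
    assert (m * Cmod (f k - s)%C < m * e) by nra.
    apply Rmult_lt_reg_l with m; lra.
Qed.

Lemma cont_f (h : R -> C) d0 k : 0 < k < d0 ->
  (forall e, 0 < e -> exists d, 0 < d /\ forall k', 0 < k' < d0 -> Rabs (k' - k) < d -> Cmod (h k' - h k)%C < e) ->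
  forall e, 0 < e -> exists d, 0 < d /\ forall k', 0 < k' < d0 -> Rabs (k' - k) < d ->
    Cmod (RtoC (/ sqrt k') * h k' - RtoC (/ sqrt k) * h k)%C < e.
Proof.
  intros Hk Hh e He.
  assert (Hq : continuity_pt (fun x => / sqrt x) k).
  { apply (continuity_pt_inv sqrt). apply continuity_pt_sqrt; lra.
    apply Rgt_not_eq, sqrt_lt_R0; lra. }
  set (B := / sqrt k + 1).
  assert (Hsk : 0 < sqrt k) by (apply sqrt_lt_R0; lra).
  assert (HB : 0 < B) by (unfold B; pose proof (Rinv_0_lt_compat _ Hsk); lra).
  set (H := Cmod (h k)). assert (HH : 0 <= H) by apply Cmod_ge_0.
  assert (Ea : 0 < Rmin 1 (e / (2 * (H + 1)))) by (apply Rmin_glb_lt; [lra|apply Rdiv_lt_0_compat; lra]).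
  destruct (eps_cont _ _ Hq _ Ea) as [da [Hda Da]].
  assert (Eb : 0 < e / (2 * B)) by (apply Rdiv_lt_0_compat; lra).
  destruct (Hh _ Eb) as [db [Hdb Db]].
  exists (Rmin da db). split; [apply Rmin_glb_lt; lra|].
  intros k' Hk' Hkk.
  specialize (Da k' (Rlt_le_trans _ _ _ Hkk (Rmin_l _ _))).
  specialize (Db k' Hk' (Rlt_le_trans _ _ _ Hkk (Rmin_r _ _))).
  replace (RtoC (/ sqrt k') * h k' - RtoC (/ sqrt k) * h k)%C with
    (RtoC (/ sqrt k') * (h k' - h k) + RtoC (/ sqrt k' - / sqrt k) * h k)%C
    by (unfold RtoC; apply injective_projections; simpl; ring).
  eapply Rle_lt_trans; [apply Cmod_triangle|]. rewrite !Cmod_Rmult.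
  fold H.
  assert (D1 : Rabs (/ sqrt k' - / sqrt k) < 1) by (eapply Rlt_le_trans; [exact Da|apply Rmin_l]).
  assert (D2 : Rabs (/ sqrt k' - / sqrt k) < e / (2 * (H + 1))) by (eapply Rlt_le_trans; [exact Da|apply Rmin_r]).
  assert (Hq' : Rabs (/ sqrt k') <= B).
  { unfold B. pose proof (Rabs_triang_inv (/ sqrt k') (/ sqrt k)).
    rewrite (Rabs_right (/ sqrt k)) in H0 by (left; apply Rinv_0_lt_compat; lra). lra. }
  pose proof (Cmod_ge_0 (h k' - h k)%C). pose proof (Rabs_pos (/ sqrt k' - / sqrt k)).
  pose proof (Rabs_pos (/ sqrt k')).
  assert (Rabs (/ sqrt k') * Cmod (h k' - h k)%C <= B * (e / (2 * B))).
  { apply Rmult_le_compat; lra. }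
  assert (Rabs (/ sqrt k' - / sqrt k) * H <= e / (2 * (H + 1)) * H).
  { apply Rmult_le_compat_r; lra. }
  assert (B * (e / (2 * B)) = e / 2) by (field; lra).
  assert (e / (2 * (H + 1)) * H < e / 2).
  { apply Rlt_le_trans with (e / (2 * (H + 1)) * (H + 1)).
    - apply Rmult_lt_compat_l; [apply Rdiv_lt_0_compat; lra|lra].
    - right. field. lra. }
  lra.
Qed.

Lemma quad_bound (al Cc x y k : R) : 0 < al -> 0 <= Cc -> 0 <= x -> 0 <= y -> 0 < k <= 1 ->
  al * (y * y) <= k * x + Cc * k * y ->
  y * y <= (4 * Cc * Cc / (al * al) + 2 * x / al) * k.
Proof.
  intros Hal HC Hx Hy Hk H.
  replace ((4 * Cc * Cc / (al * al) + 2 * x / al) * k) with ((4 * Cc * Cc * k + 2 * x * al * k) / (al * al))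
    by (field; lra).
  apply Rmult_le_reg_l with (al * al); [nra|].
  replace (al * al * ((4 * Cc * Cc * k + 2 * x * al * k) / (al * al))) with (4 * Cc * Cc * k + 2 * x * al * k)
    by (field; lra).
  destruct (Rle_dec (al * y) (2 * Cc * k)) as [H1|H1].
  - assert (al * y * (al * y) <= 2 * Cc * k * (2 * Cc * k)) by (apply Rmult_le_compat; nra).
    assert (Cc * Cc * k * k <= Cc * Cc * k) by (assert (0 <= Cc * Cc) by nra; nra).
    nra.
  - assert (Cc * k * y <= al * y * y / 2) by nra.
    nra.
Qed.

Lemma core (h : R -> C) (X A : C) (Cc d0 : R) :
  A <> 0%C -> 0 <= Cc -> 0 < d0 ->
  (forall e, 0 < e -> exists d, 0 < d /\ forall k, 0 < k < d -> Cmod (h k) < e) ->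
  (forall k, 0 < k < d0 -> forall e, 0 < e -> exists d, 0 < d /\
     forall k', 0 < k' < d0 -> Rabs (k' - k) < d -> Cmod (h k' - h k)%C < e) ->
  (forall e, 0 < e -> exists d, 0 < d /\ forall k, 0 < k < d ->
     Cmod (RtoC k * X - RtoC (/2) * A * h k * h k)%C <= e * Cmod (h k) ^ 2 + Cc * k * Cmod (h k)) ->
  exists L, filterlim (fun k => (RtoC (/ sqrt k) * h k)%C) (at_right 0) (locally L)
         /\ X = (RtoC (/2) * A * L * L)%C.
Proof.
  intros HA HC Hd0 H1 H2 H3.
  set (f := fun k => (RtoC (/ sqrt k) * h k)%C).
  set (c := (RtoC 2 * X / A)%C).
  assert (HmA : 0 < Cmod A) by (apply Cmod_gt_0, HA).
  set (al := Cmod A / 4). assert (Hal : 0 < al) by (unfold al; lra).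
  destruct (H3 al Hal) as [da [Hda Da]].
  set (M := 4 * Cc * Cc / (al * al) + 2 * Cmod X / al).
  assert (HM : 0 <= M).
  { unfold M. pose proof (Cmod_ge_0 X).
    assert (0 <= 4 * Cc * Cc / (al * al)) by (apply Rmult_le_pos; [nra|left; apply Rinv_0_lt_compat; nra]).
    assert (0 <= 2 * Cmod X / al) by (apply Rmult_le_pos; [nra|left; apply Rinv_0_lt_compat; nra]).
    lra. }
  assert (Bnd : forall k, 0 < k < Rmin da 1 -> Cmod (h k) * Cmod (h k) <= M * k).
  { intros k Hk.
    assert (Hk1 : 0 < k < da) by (pose proof (Rmin_l da 1); lra).
    assert (Hk2 : k <= 1) by (pose proof (Rmin_r da 1); lra).
    specialize (Da k Hk1). set (y := Cmod (h k)) in *.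
    assert (Hy : 0 <= y) by apply Cmod_ge_0.
    assert (E1 : Cmod (RtoC (/2) * A * h k * h k)%C = 2 * al * (y * y)).
    { rewrite !Cmod_mult, Cmod_R, Rabs_right by lra. unfold al, y. field. }
    assert (E2 : Cmod (RtoC k * X)%C = k * Cmod X) by (rewrite Cmod_Rmult, Rabs_right by lra; reflexivity).
    pose proof (Cmod_triangle (RtoC k * X)%C (- (RtoC k * X - RtoC (/2) * A * h k * h k))%C) as T.
    replace (RtoC k * X + - (RtoC k * X - RtoC (/2) * A * h k * h k))%C
      with (RtoC (/2) * A * h k * h k)%C in T by ring.
    rewrite Cmod_opp, E1, E2 in T.
    assert (y ^ 2 = y * y) by ring.
    replace (M * k) with ((4 * Cc * Cc / (al * al) + 2 * Cmod X / al) * k) by reflexivity.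
    apply quad_bound; [exact Hal|exact HC|apply Cmod_ge_0|exact Hy|lra|].
    nra. }
  assert (Hsq : forall e, 0 < e -> exists d, 0 < d /\ forall k, 0 < k < d -> Cmod (f k * f k - c)%C < e).
  { intros e He.
    assert (He1 : 0 < e * Cmod A / (4 * (M + 1))) by (apply Rdiv_lt_0_compat; nra).
    destruct (H3 _ He1) as [db [Hdb Db]].
    assert (He2 : 0 < e * Cmod A / (4 * (Cc + 1))) by (apply Rdiv_lt_0_compat; nra).
    destruct (H1 _ He2) as [dc [Hdc Dc]].
    exists (Rmin (Rmin da 1) (Rmin db dc)). split; [repeat apply Rmin_glb_lt; lra|].
    intros k Hk.
    pose proof (Rmin_l (Rmin da 1) (Rmin db dc)). pose proof (Rmin_r (Rmin da 1) (Rmin db dc)).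
    pose proof (Rmin_l db dc). pose proof (Rmin_r db dc).
    assert (Hk0 : 0 < k) by lra.
    specialize (Bnd k ltac:(lra)). specialize (Db k ltac:(lra)). specialize (Dc k ltac:(lra)).
    set (y := Cmod (h k)) in *. assert (Hy : 0 <= y) by apply Cmod_ge_0.
    assert (Hsk : 0 < sqrt k) by (apply sqrt_lt_R0; lra).
    assert (Ef : (f k * f k - c)%C =
       (RtoC (/ k) * (RtoC 2 / A) * (RtoC (/2) * A * h k * h k - RtoC k * X))%C).
    { assert (Ef1 : (f k * f k)%C = (RtoC (/ k) * (h k * h k))%C).
      { unfold f. cbv beta. replace (RtoC (/ k)) with (RtoC (/ sqrt k) * RtoC (/ sqrt k))%C; [ring|].
        unfold RtoC. apply injective_projections; simpl; [|ring].
        rewrite <- (sqrt_sqrt k) at 3 by lra. field. lra. }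
      rewrite Ef1. unfold c. rewrite (RtoC_inv k) by lra.
      assert (Hk' : RtoC k <> 0%C) by (intros E; injection E as E; lra).
      rewrite (RtoC_inv 2) by lra. field. split; assumption. }
    rewrite Ef, !Cmod_mult, Cmod_div, !Cmod_R by exact HA.
    rewrite (Rabs_right (/ k)) by (left; apply Rinv_0_lt_compat; lra).
    rewrite (Rabs_right 2) by lra.
    replace (RtoC (/ 2) * A * h k * h k - RtoC k * X)%C with (- (RtoC k * X - RtoC (/ 2) * A * h k * h k))%C by ring.
    rewrite Cmod_opp.
    assert (Hy2 : y ^ 2 = y * y) by ring.
    set (Q := Cmod (RtoC k * X - RtoC (/ 2) * A * h k * h k)%C) in *.
    assert (HQ : Q <= e * Cmod A / (4 * (M + 1)) * (M * k) + Cc * k * y).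
    { eapply Rle_trans; [exact Db|]. rewrite Hy2.
      apply Rplus_le_compat_r, Rmult_le_compat_l; [lra|exact Bnd]. }
    assert (HQ2 : / k * Q <= e * Cmod A / (4 * (M + 1)) * M + Cc * y).
    { apply Rmult_le_reg_l with k; [lra|].
      replace (k * (/ k * Q)) with Q by (field; lra). nra. }
    assert (HQ3 : e * Cmod A / (4 * (M + 1)) * M <= e * Cmod A / 4).
    { apply Rle_trans with (e * Cmod A / (4 * (M + 1)) * (M + 1)); [apply Rmult_le_compat_l; lra|].
      right. field. lra. }
    assert (HQ4 : Cc * y < e * Cmod A / 4 + 0).
    { apply Rle_lt_trans with (Cc * (e * Cmod A / (4 * (Cc + 1)))).
      - apply Rmult_le_compat_l; lra.
      - apply Rlt_le_trans with ((Cc + 1) * (e * Cmod A / (4 * (Cc + 1)))).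
        + apply Rmult_lt_compat_r; [apply Rdiv_lt_0_compat; nra|lra].
        + right. field. lra. }
    replace (/ k * (2 / Cmod A) * Q) with (2 / Cmod A * (/ k * Q)) by ring.
    apply Rlt_le_trans with (2 / Cmod A * (e * Cmod A / 4 + e * Cmod A / 4)).
    - apply Rmult_lt_compat_l; [apply Rdiv_lt_0_compat; lra|lra].
    - right. field. lra. }
  destruct (branch f c d0 Hd0) as [L [HL HLL]].
  - intros k Hk e He. apply (cont_f h d0 k Hk (H2 k Hk) e He).
  - exact Hsq.
  - exists L. split.
    + apply lim_at_right, HL.
    + replace (RtoC (/2) * A * L * L)%C with (RtoC (/2) * A * (L * L))%C by ring.
      rewrite HLL. unfold c. rewrite (RtoC_inv 2) by lra. field.
      exact HA.
Qed.

Lemma side (F G : C -> C) (z0 : C) (t0 : R) (A : C) (w : C -> C) (h0 : R -> C) (X : C) (tau d0 : R) :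
  A <> 0%C -> 0 < d0 -> (forall z, Cmod (w z) = Cmod z) ->
  (forall e, 0 < e -> exists d, 0 < d /\ forall h, Cmod h < d ->
     Cmod (F (z0 + h) - F z0 - t0 * (G (z0 + h) - G z0) - RtoC (/2) * A * w h * w h)%C <= e * Cmod h ^ 2) ->
  (exists K dL, 0 < dL /\ 0 <= K /\ forall h, Cmod h < dL -> Cmod (G (z0 + h) - G z0)%C <= K * Cmod h) ->
  (forall k, 0 < k < d0 -> (RtoC k * X)%C =
     ((F (z0 + h0 k) - F z0 - t0 * (G (z0 + h0 k) - G z0)) - RtoC (k * tau) * (G (z0 + h0 k) - G z0))%C) ->
  (forall e, 0 < e -> exists d, 0 < d /\ forall k, 0 < k < d -> Cmod (h0 k) < e) ->
  (forall k, 0 < k < d0 -> forall e, 0 < e -> exists d, 0 < d /\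
     forall k', 0 < k' < d0 -> Rabs (k' - k) < d -> Cmod (w (h0 k') - w (h0 k))%C < e) ->
  exists L, filterlim (fun k => (RtoC (/ sqrt k) * w (h0 k))%C) (at_right 0) (locally L)
         /\ X = (RtoC (/2) * A * L * L)%C.
Proof.
  intros HA Hd0 Hw Hexp [K [dL [HdL [HK HL]]]] Heq H0 Hc.
  apply (core (fun k => w (h0 k)) X A (Rabs tau * K) d0 HA); [pose proof (Rabs_pos tau); nra|exact Hd0| | exact Hc|].
  - intros e He. destruct (H0 e He) as [d [Hd D]]. exists d. split; [exact Hd|].
    intros k Hk. rewrite Hw. apply D, Hk.
  - intros e He. destruct (Hexp e He) as [dc [Hdc Dc]].
    destruct (H0 (Rmin dc dL)) as [d1 [Hd1 D1]]; [apply Rmin_glb_lt; lra|].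
    exists (Rmin d1 d0). split; [apply Rmin_glb_lt; lra|].
    intros k Hk.
    assert (Hk1 : 0 < k < d1) by (pose proof (Rmin_l d1 d0); lra).
    assert (Hk0 : 0 < k < d0) by (pose proof (Rmin_r d1 d0); lra).
    specialize (D1 k Hk1).
    assert (Hc1 : Cmod (h0 k) < dc) by (eapply Rlt_le_trans; [exact D1|apply Rmin_l]).
    assert (Hc2 : Cmod (h0 k) < dL) by (eapply Rlt_le_trans; [exact D1|apply Rmin_r]).
    specialize (Dc _ Hc1). specialize (HL _ Hc2).
    rewrite (Heq k Hk0), Hw.
    replace ((F (z0 + h0 k) - F z0 - t0 * (G (z0 + h0 k) - G z0)) - RtoC (k * tau) * (G (z0 + h0 k) - G z0)
             - RtoC (/2) * A * w (h0 k) * w (h0 k))%C with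
      ((F (z0 + h0 k) - F z0 - t0 * (G (z0 + h0 k) - G z0) - RtoC (/2) * A * w (h0 k) * w (h0 k))
       + (- (RtoC (k * tau) * (G (z0 + h0 k) - G z0))))%C by ring.
    eapply Rle_trans; [apply Cmod_triangle|]. rewrite Cmod_opp, Cmod_Rmult, Rabs_mult, (Rabs_right k) by lra.
    apply Rplus_le_compat; [exact Dc|].
    pose proof (Rabs_pos tau).
    replace (Rabs tau * K * k * Cmod (h0 k)) with (k * Rabs tau * (K * Cmod (h0 k))) by ring.
    apply Rmult_le_compat_l; [nra|exact HL].
Qed.

Lemma ray_cont (Omega : R -> R -> Prop) (r : R -> R -> C) x0 t0 xi tau dO :
  continuous_on2 Omega r -> 0 < dO ->
  (forall k, 0 < k < dO -> Omega (x0 + k * xi) (t0 + k * tau)) -> Omega x0 t0 ->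
  (forall e, 0 < e -> exists d, 0 < d /\ forall k, 0 < k < d ->
      Cmod (Cminus (r (x0 + k * xi) (t0 + k * tau)) (r x0 t0)) < e) /\
  (forall k, 0 < k < dO -> forall e, 0 < e -> exists d, 0 < d /\ forall k', 0 < k' < dO ->
      Rabs (k' - k) < d ->
      Cmod (Cminus (r (x0 + k' * xi) (t0 + k' * tau)) (r (x0 + k * xi) (t0 + k * tau))) < e).
Proof.
  intros Hc HdO HO HO0.
  pose proof (Rabs_pos xi) as Hxi. pose proof (Rabs_pos tau) as Htau.
  split.
  - intros e He. destruct (Hc x0 t0 HO0 e He) as [d [Hd D]].
    exists (Rmin dO (Rmin (d / (Rabs xi + 1)) (d / (Rabs tau + 1)))).
    split; [repeat apply Rmin_glb_lt; try apply Rdiv_lt_0_compat; lra|].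
    intros k Hk.
    pose proof (Rmin_l dO (Rmin (d / (Rabs xi + 1)) (d / (Rabs tau + 1)))).
    pose proof (Rmin_r dO (Rmin (d / (Rabs xi + 1)) (d / (Rabs tau + 1)))).
    pose proof (Rmin_l (d / (Rabs xi + 1)) (d / (Rabs tau + 1))).
    pose proof (Rmin_r (d / (Rabs xi + 1)) (d / (Rabs tau + 1))).
    apply D; [apply HO; lra| |].
    + replace (x0 + k * xi - x0) with (k * xi) by ring. rewrite Rabs_mult, (Rabs_right k) by lra.
      apply Rle_lt_trans with (d / (Rabs xi + 1) * Rabs xi); [apply Rmult_le_compat_r; lra|].
      apply Rlt_le_trans with (d / (Rabs xi + 1) * (Rabs xi + 1)); [apply Rmult_lt_compat_l; [apply Rdiv_lt_0_compat|]; lra|].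
      right; field; lra.
    + replace (t0 + k * tau - t0) with (k * tau) by ring. rewrite Rabs_mult, (Rabs_right k) by lra.
      apply Rle_lt_trans with (d / (Rabs tau + 1) * Rabs tau); [apply Rmult_le_compat_r; lra|].
      apply Rlt_le_trans with (d / (Rabs tau + 1) * (Rabs tau + 1)); [apply Rmult_lt_compat_l; [apply Rdiv_lt_0_compat|]; lra|].
      right; field; lra.
  - intros k Hk e He. destruct (Hc _ _ (HO k Hk) e He) as [d [Hd D]].
    exists (Rmin (d / (Rabs xi + 1)) (d / (Rabs tau + 1))).
    split; [repeat apply Rmin_glb_lt; try apply Rdiv_lt_0_compat; lra|].
    intros k' Hk' Hkk.
    pose proof (Rmin_l (d / (Rabs xi + 1)) (d / (Rabs tau + 1))).
    pose proof (Rmin_r (d / (Rabs xi + 1)) (d / (Rabs tau + 1))).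
    pose proof (Rabs_pos (k' - k)).
    apply D; [apply HO; lra| |].
    + replace (x0 + k' * xi - (x0 + k * xi)) with ((k' - k) * xi) by ring. rewrite Rabs_mult.
      apply Rle_lt_trans with (d / (Rabs xi + 1) * Rabs xi); [apply Rmult_le_compat_r; lra|].
      apply Rlt_le_trans with (d / (Rabs xi + 1) * (Rabs xi + 1)); [apply Rmult_lt_compat_l; [apply Rdiv_lt_0_compat|]; lra|].
      right; field; lra.
    + replace (t0 + k' * tau - (t0 + k * tau)) with ((k' - k) * tau) by ring. rewrite Rabs_mult.
      apply Rle_lt_trans with (d / (Rabs tau + 1) * Rabs tau); [apply Rmult_le_compat_r; lra|].
      apply Rlt_le_trans with (d / (Rabs tau + 1) * (Rabs tau + 1)); [apply Rmult_lt_compat_l; [apply Rdiv_lt_0_compat|]; lra|].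
      right; field; lra.
Qed.
Theorem mainTheorem5
  (lam mu_p mu_m : C -> C)        (* lambda_+, mu_+, mu_- as functions of r_+ *)
  (r : R -> R -> C)               (* r_+(x,t); r_-(x,t) = conj r_+(x,t) *)
  (Omega : R -> R -> Prop)        (* domain (in (x,t)) of the solution *)
  (x0 t0 eps : R) :
  0 < eps ->
  (* smoothness of the data near r0 = r(x0,t0) *)
  smooth_on (Cball (r x0 t0) eps) lam ->
  smooth_on (Cball (r x0 t0) eps) mu_p ->
  smooth_on (Cball (r x0 t0) eps) mu_m ->
  (* ellipticity: lambda_+ <> lambda_- *)
  (forall z, Cball (r x0 t0) eps z -> lam z <> lam_minus lam z) ->
  (* equations for mu_+- *)
  (forall z, Cball (r x0 t0) eps z ->
     dm mu_p z = Cmult (Cdiv (Cminus (mu_p z) (mu_m z))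
                             (Cminus (lam z) (lam_minus lam z))) (dm lam z) /\
     dp mu_m z = Cmult (Cdiv (Cminus (mu_p z) (mu_m z))
                             (Cminus (lam z) (lam_minus lam z)))
                       (dp (lam_minus lam) z)) ->
  (* the solution, given by the hodograph equations *)
  Omega x0 t0 ->
  continuous_on2 Omega r ->
  (forall x t, Omega x t ->
     Cplus (RtoC x) (Cmult (lam (r x t)) (RtoC t)) = mu_p (r x t) /\
     Cplus (RtoC x) (Cmult (lam_minus lam (r x t)) (RtoC t)) = mu_m (r x t)) ->
  (* elliptic break-up at (x0,t0) *)
  dp mu_p (r x0 t0) = Cmult (RtoC t0) (dp lam (r x0 t0)) ->
  dm mu_m (r x0 t0) = Cmult (RtoC t0) (dm (lam_minus lam) (r x0 t0)) ->
  (* genericity *)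
  a_plus lam mu_p t0 (r x0 t0) <> RtoC 0 ->
  a_minus lam mu_m t0 (r x0 t0) <> RtoC 0 ->
  (* for every direction (x - x0, t - t0) = k (xi, tau), i.e.
     (x_+, x_-) = k (X_+, X_-) with X_+- = xi + lambda^0_+- tau,
     along which the solution is defined for small k > 0 *)
  forall xi tau : R,
    (exists d, 0 < d /\ forall k, 0 < k < d -> Omega (x0 + k * xi) (t0 + k * tau)) ->
    exists Rp Rm : C,
      filterlim (fun k => Cmult (RtoC (/ sqrt k))
                   (Cminus (r (x0 + k * xi) (t0 + k * tau)) (r x0 t0)))
                (at_right 0) (locally Rp) /\
      filterlim (fun k => Cmult (RtoC (/ sqrt k))
                   (Cminus (Cconj (r (x0 + k * xi) (t0 + k * tau)))
                           (Cconj (r x0 t0))))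
                (at_right 0) (locally Rm) /\
      Cplus (RtoC xi) (Cmult (lam (r x0 t0)) (RtoC tau))
        = Cmult (Cmult (RtoC (/ 2)) (a_plus lam mu_p t0 (r x0 t0))) (Cmult Rp Rp) /\
      Cplus (RtoC xi) (Cmult (lam_minus lam (r x0 t0)) (RtoC tau))
        = Cmult (Cmult (RtoC (/ 2)) (a_minus lam mu_m t0 (r x0 t0))) (Cmult Rm Rm).
Proof.
  intros Heps Hsl Hsp Hsm Hne Hpde HOm0 Hcont Hhod Hbp Hbm Hap Ham xi tau Hray.
  pose proof (Hsl 2%nat) as Hl. pose proof (Hsp 2%nat) as Hp. pose proof (Hsm 2%nat) as Hm.
  set (z0 := r x0 t0) in *.
  assert (Hz0 : Cball z0 eps z0) by (unfold Cball; replace (Cminus z0 z0) with (RtoC 0) by ring; rewrite Cmod_0; exact Heps).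
  destruct (Hhod x0 t0 HOm0) as [E0p E0m]. fold z0 in E0p, E0m.
  assert (Hhod0 : Cminus (mu_p z0) (mu_m z0) = Cmult (RtoC t0) (Cminus (lam z0) (lam_minus lam z0))).
  { rewrite <- E0p, <- E0m. ring. }
  destruct (hess lam mu_p mu_m z0 eps t0 Heps Hl Hp Hm Hne Hpde Hhod0 Hbp Hbm)
    as [[HA1 HA2] [[HB1 HB2] [C11 [C21 [Y11 Y21]]]]].
  pose proof (schwarzC mu_p z0 eps Heps Hp) as Sp.
  pose proof (schwarzC lam z0 eps Heps Hl) as Sl.
  pose proof (schwarzC mu_m z0 eps Heps Hm) as Sm.
  destruct (Ck2_exd _ _ _ Hl Hz0) as [Xl [Xl1 Xl2]].
  destruct (Ck2_exd _ _ _ Hp Hz0) as [Xp [Xp1 Xp2]].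
  destruct (Ck2_exd _ _ _ Hm Hz0) as [Xm [Xm1 Xm2]].
  pose proof (expn_peano lam z0 eps Heps Hl) as El.
  pose proof (expn_peano mu_p z0 eps Heps Hp) as Ep.
  pose proof (expn_peano mu_m z0 eps Heps Hm) as Em.
  pose proof (expn_conj _ _ _ _ _ _ _ El) as Ec.
  destruct (lipschitz _ _ _ _ _ _ _ El) as [K [dL [HdL [HK HLl]]]].
  assert (Lp : exists K dL, 0 < dL /\ 0 <= K /\ forall h, Cmod h < dL -> Cmod (lam (z0 + h) - lam z0)%C <= K * Cmod h)
    by (exists K, dL; auto).
  assert (Lm : exists K dL, 0 < dL /\ 0 <= K /\ forall h, Cmod h < dL ->
             Cmod (lam_minus lam (z0 + h) - lam_minus lam z0)%C <= K * Cmod h).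
  { exists K, dL. split; [exact HdL|split; [exact HK|]]. intros h Hh.
    unfold lam_minus. rewrite <- Cminus_conj, Cmod_conj. apply HLl, Hh. }
  assert (Cp := combine mu_p lam z0 t0 (a_plus lam mu_p t0 z0) (fun h => h) _ _ _ _ _ _ _ _ _ _ Ep El).
  assert (Cm := combine mu_m (lam_minus lam) z0 t0 (a_minus lam mu_m t0 z0) Cconj _ _ _ _ _ _ _ _ _ _ Em Ec).
  destruct Hray as [dO [HdO HO]].
  destruct (ray_cont Omega r x0 t0 xi tau dO Hcont HdO HO HOm0) as [R0 RC].
  set (h0 := fun k => Cminus (r (x0 + k * xi)%R (t0 + k * tau)%R) z0).
  assert (Hzh : forall k, (z0 + h0 k)%C = r (x0 + k * xi)%R (t0 + k * tau)%R) by (intros; unfold h0; ring).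
  assert (Sp' := side mu_p lam z0 t0 (a_plus lam mu_p t0 z0) (fun h => h) h0
     (Cplus (RtoC xi) (Cmult (lam z0) (RtoC tau))) tau dO Hap HdO (fun z => eq_refl)).
  assert (Sm' := side mu_m (lam_minus lam) z0 t0 (a_minus lam mu_m t0 z0) Cconj h0
     (Cplus (RtoC xi) (Cmult (lam_minus lam z0) (RtoC tau))) tau dO Ham HdO Cmod_conj).
  destruct Sp' as [Rp [HRp ERp]].
  - apply Cp. intros a b. unfold a_plus.
    rewrite (dpdp_eq mu_p z0 Xp1 Xp2), (dpdp_eq lam z0 Xl1 Xl2).
    apply alg_plus; assumption.
  - exact Lp.
  - intros k Hk. rewrite Hzh. destruct (Hhod _ _ (HO k Hk)) as [Ek _].
    rewrite <- Ek, <- E0p. rewrite !RtoC_plus, !RtoC_mult. ring.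
  - exact R0.
  - intros k Hk e He. destruct (RC k Hk e He) as [d [Hd D]]. exists d. split; [exact Hd|].
    intros k' Hk' Hkk. unfold h0. replace (Cminus (r (x0 + k' * xi)%R (t0 + k' * tau)%R) z0 - Cminus (r (x0 + k * xi)%R (t0 + k * tau)%R) z0)%C
      with (Cminus (r (x0 + k' * xi)%R (t0 + k' * tau)%R) (r (x0 + k * xi)%R (t0 + k * tau)%R)) by ring.
    apply D; assumption.
  - destruct Sm' as [Rm [HRm ERm]].
    + apply Cm. intros a b. unfold a_minus.
      rewrite (dmdm_eq mu_m z0 Xm1 Xm2), (dmdmc_eq lam z0 Xl1 Xl2).
      apply alg_minus; try assumption. rewrite Sl. reflexivity.
    + exact Lm.
    + intros k Hk. rewrite Hzh. destruct (Hhod _ _ (HO k Hk)) as [_ Ek].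
      rewrite <- Ek, <- E0m. rewrite !RtoC_plus, !RtoC_mult. ring.
    + exact R0.
    + intros k Hk e He. destruct (RC k Hk e He) as [d [Hd D]]. exists d. split; [exact Hd|].
      intros k' Hk' Hkk. unfold h0. cbv beta. rewrite <- Cminus_conj, Cmod_conj.
      replace (Cminus (r (x0 + k' * xi)%R (t0 + k' * tau)%R) z0 - Cminus (r (x0 + k * xi)%R (t0 + k * tau)%R) z0)%C
        with (Cminus (r (x0 + k' * xi)%R (t0 + k' * tau)%R) (r (x0 + k * xi)%R (t0 + k * tau)%R)) by ring.
      apply D; assumption.
    + exists Rp, Rm. split; [|split; [|split]].
      * exact HRp.
      * eapply filterlim_ext; [|exact HRm]. intros k. simpl. unfold h0. rewrite Cminus_conj. reflexivity.
      * rewrite ERp. ring.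
      * rewrite ERm. ring.
Qed.
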